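(* Consider the $N$ iOFP systems with exosystem-generated disturbances described in the context, over a connected undirected graph with $E$ edges and incidence matrix $B=[b_{ig}]\in\mathbb R^{N\times E}$. Let $R=\mathrm{diag}(R_1,\dots,R_N)$, $m=\sum_i m_i$, $H=(B^+\otimes I_q)R\in\mathbb R^{Eq\times m}$ and let $H_g\in\mathbb R^{q\times m}$ be its $g$-th block row, so $H=[H_1;\dots;H_E]$. Let $s(w):=[s_1(w_1);\dots;s_N(w_N)]$ for $w=[w_1;\dots;w_N]\in\mathbb R^m$. For each edge $g=1,\dots,E$ set $\varrho_g=\sum_{j}b_{jg}y_j$ and use the controller $$\dot\zeta_g=s(\zeta_g)+H_g^\top\varrho_g,\qquad \dot\kappa_g=\delta_g\varrho_g^\top\varrho_g,\qquad v_g=H_g\zeta_g+\kappa_g\varrho_g,$$ with $\zeta_g\in\mathbb R^m$, $\kappa_g\in\mathbb R$, arbitrary gains $\delta_g>0$ and arbitrary initial conditions, and set the inputs $u_i=-\sum_{g=1}^E b_{ig}v_g$, $i=1,\dots,N$. If the closed-loop solution $(x,\zeta,\kappa)$ is bounded on $[0,\infty)$, then $\lim_{t\to\infty}\|y_i(t)-\bar y(t)\|=0$ for all $i$, where $\bar y=\frac1N\sum_j y_j$.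
   Context: Each system $\dot x_i=f(x_i,u_i,d_i)$, $y_i=h(x_i)$ has $x_i\in\mathbb R^n$, $u_i,y_i,d_i\in\mathbb R^q$; $f$ locally Lipschitz, $h$ continuously differentiable. iOFP with constant $\sigma\in\mathbb R$: there exist $\Phi:\mathbb R^n\times\mathbb R^n\to\mathbb R_{\ge0}$ (continuously differentiable) and class-$\mathcal K_\infty$ functions $\underline\alpha,\overline\alpha$ with $\underline\alpha(\|x_i-x_i'\|)\le\Phi(x_i,x_i')\le\overline\alpha(\|x_i-x_i'\|)$ and $\frac{\partial\Phi}{\partial x_i}(x_i,x_i')f(x_i,u_i,d_i)+\frac{\partial\Phi}{\partial x_i'}(x_i,x_i')f(x_i',u_i',d_i')\le\sigma\|y_i-y_i'\|^2+(y_i-y_i')^\top\big((u_i+d_i)-(u_i'+d_i')\big)$ for all arguments. Exosystems: $\dot w_i=s_i(w_i)$, $d_i=R_iw_i$, $w_i\in\mathbb R^{m_i}$, $s_i$ locally Lipschitz, $s_i(0)=0$, $(w_i-w_i')^\top(s_i(w_i)-s_i(w_i'))\le0$ for all $w_i,w_i'$. Graph: symmetric nonnegative adjacency $A=[a_{ij}]$, connected. Incidence matrix: for the $g$-th edge $(i,j)$ (each undirected edge taken once with an orientation), $b_{ig}=-\sqrt{a_{ij}}$, $b_{jg}=\sqrt{a_{ij}}$, and $b_{kg}=0$ otherwise; thus $L=BB^\top$ is the Laplacian. $B^+$ is the Moore–Penrose pseudoinverse, $\otimes$ the Kronecker product. *)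

(* Defs.v *)
(* Stdlib (classical reals). Vectors in R^k are encoded as functions
   nat -> R of which only the coordinates 0..k-1 are meaningful. *)
From Stdlib Require Import Reals Lra Lia.
Open Scope R_scope.

Definition vec := nat -> R.
Definition mat := nat -> nat -> R.

Fixpoint sumR (k : nat) (F : nat -> R) : R :=
  match k with O => 0 | S k' => sumR k' F + F k' end.

Fixpoint sumN (k : nat) (F : nat -> nat) : nat :=
  match k with O => O | S k' => (sumN k' F + F k')%nat end.

Definition dot (k : nat) (u v : vec) : R := sumR k (fun j => u j * v j).
Definition vnorm (k : nat) (v : vec) : R := sqrt (sumR k (fun j => v j ^ 2)).
Definition vsub (u v : vec) : vec := fun j => u j - v j.
Definition upd (x : vec) (j : nat) (r : R) : vec :=
  fun k => if Nat.eqb k j then r else x k.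

Definition mmul (k : nat) (A B : mat) : mat :=
  fun r c => sumR k (fun j => A r j * B j c).
Definition tr (A : mat) : mat := fun r c => A c r.
Definition idm : mat := fun r c => if Nat.eqb r c then 1 else 0.
Definition mat_eq (r c : nat) (A B : mat) : Prop :=
  forall i j, (i < r)%nat -> (j < c)%nat -> A i j = B i j.

Definition kron (p2 q2 : nat) (A Bm : mat) : mat :=
  fun r c => A (r / p2)%nat (c / q2)%nat * Bm (r mod p2)%nat (c mod q2)%nat.

Definition is_pinv (N E : nat) (B Bp : mat) : Prop :=
  mat_eq N E (mmul N (mmul E B Bp) B) B /\
  mat_eq E N (mmul E (mmul N Bp B) Bp) Bp /\
  mat_eq N N (tr (mmul E B Bp)) (mmul E B Bp) /\
  mat_eq E E (tr (mmul N Bp B)) (mmul N Bp B).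

(* block offsets for R^m = R^{m_0} x ... x R^{m_{N-1}} *)
Definition offs (m : nat -> nat) (i : nat) : nat := sumN i m.
Definition inblk (m : nat -> nat) (i c : nat) : bool :=
  (Nat.leb (offs m i) c && Nat.ltb c (offs m i + m i))%bool.

Definition blockdiag (q N : nat) (m : nat -> nat) (Rm : nat -> mat) : mat :=
  fun r c => let i := (r / q)%nat in
    if (Nat.ltb i N && inblk m i c)%bool
    then Rm i (r mod q)%nat (c - offs m i)%nat else 0.

Definition Hmat (q N : nat) (m : nat -> nat) (Bp : mat) (Rm : nat -> mat) : mat :=
  mmul (N * q) (kron q q Bp idm) (blockdiag q N m Rm).
Definition Hg (q N : nat) (m : nat -> nat) (Bp : mat) (Rm : nat -> mat)
  (g : nat) : mat := fun l c => Hmat q N m Bp Rm (g * q + l)%nat c.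

Definition sstack (N : nat) (m : nat -> nat) (s : nat -> vec -> vec) (w : vec) : vec :=
  fun c => sumR N (fun i =>
    if inblk m i c then s i (fun k => w (offs m i + k)%nat) (c - offs m i)%nat
    else 0).

Definition locLip (k kout : nat) (F : vec -> vec) : Prop :=
  forall x0, exists rad, rad > 0 /\ exists L, forall x x',
    vnorm k (vsub x x0) < rad -> vnorm k (vsub x' x0) < rad ->
    vnorm kout (vsub (F x) (F x')) <= L * vnorm k (vsub x x').

Definition dist3 (n q : nat) (x u d x' u' d' : vec) : R :=
  sqrt (vnorm n (vsub x x') ^ 2 + vnorm q (vsub u u') ^ 2 + vnorm q (vsub d d') ^ 2).

Definition locLip_f (n q : nat) (f : vec -> vec -> vec -> vec) : Prop :=
  forall x0 u0 d0, exists rad, rad > 0 /\ exists L, forall x u d x' u' d',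
    dist3 n q x u d x0 u0 d0 < rad -> dist3 n q x' u' d' x0 u0 d0 < rad ->
    vnorm n (vsub (f x u d) (f x' u' d')) <= L * dist3 n q x u d x' u' d'.

(* h : R^n -> R^q depends only on the n meaningful coordinates (encoding
   well-formedness) and is continuously differentiable: all partial
   derivatives exist everywhere and are continuous. *)
Definition C1map (n q : nat) (h : vec -> vec) : Prop :=
  (forall x x', (forall k, (k < n)%nat -> x k = x' k) ->
     forall l, (l < q)%nat -> h x l = h x' l) /\
  exists Dh : vec -> nat -> nat -> R,
    (forall x l j, (l < q)%nat -> (j < n)%nat ->
       derivable_pt_lim (fun r => h (upd x j r) l) (x j) (Dh x l j)) /\
    (forall l j, (l < q)%nat -> (j < n)%nat -> forall x eps, eps > 0 ->
       exists del, del > 0 /\ forall x',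
         vnorm n (vsub x' x) < del -> Rabs (Dh x' l j - Dh x l j) < eps).

Definition C1pair (n : nat) (Phi : vec -> vec -> R) (D1 D2 : vec -> vec -> vec) : Prop :=
  (forall x1 x2 x1' x2', (forall k, (k < n)%nat -> x1 k = x1' k /\ x2 k = x2' k) ->
     Phi x1 x2 = Phi x1' x2') /\
  (forall x x' j, (j < n)%nat ->
     derivable_pt_lim (fun r => Phi (upd x j r) x') (x j) (D1 x x' j) /\
     derivable_pt_lim (fun r => Phi x (upd x' j r)) (x' j) (D2 x x' j)) /\
  (forall j, (j < n)%nat -> forall x x' eps, eps > 0 ->
     exists del, del > 0 /\ forall z z',
       vnorm n (vsub z x) < del -> vnorm n (vsub z' x') < del ->
       Rabs (D1 z z' j - D1 x x' j) < eps /\ Rabs (D2 z z' j - D2 x x' j) < eps).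

Definition classKinf (a : R -> R) : Prop :=
  a 0 = 0 /\
  (forall r1 r2, 0 <= r1 -> r1 < r2 -> a r1 < a r2) /\
  (forall r, 0 <= r -> forall eps, eps > 0 -> exists del, del > 0 /\
     forall r', 0 <= r' -> Rabs (r' - r) < del -> Rabs (a r' - a r) < eps) /\
  (forall M, exists r, 0 <= r /\ a r > M).

Definition iOFP (n q : nat) (f : vec -> vec -> vec -> vec) (h : vec -> vec)
  (sigma : R) : Prop :=
  exists (Phi : vec -> vec -> R) (D1 D2 : vec -> vec -> vec) (al au : R -> R),
    C1pair n Phi D1 D2 /\ classKinf al /\ classKinf au /\
    (forall x x', 0 <= Phi x x' /\
       al (vnorm n (vsub x x')) <= Phi x x' /\ Phi x x' <= au (vnorm n (vsub x x'))) /\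
    (forall x x' u u' d d',
       dot n (D1 x x') (f x u d) + dot n (D2 x x') (f x' u' d')
       <= sigma * (vnorm q (vsub (h x) (h x'))) ^ 2
          + dot q (vsub (h x) (h x')) (fun l => (u l + d l) - (u' l + d' l))).

Definition exo_ok (mi : nat) (si : vec -> vec) : Prop :=
  locLip mi mi si /\
  (forall k, (k < mi)%nat -> si (fun _ => 0) k = 0) /\
  (forall w w', dot mi (vsub w w') (vsub (si w) (si w')) <= 0).

Inductive reach (N : nat) (A : mat) (i : nat) : nat -> Prop :=
| reach_refl : reach N A i i
| reach_step : forall j k, reach N A i j -> (k < N)%nat -> A j k > 0 -> reach N A i k.

Definition graph_ok (N : nat) (A : mat) : Prop :=
  (forall i j, (i < N)%nat -> (j < N)%nat -> A i j = A j i /\ 0 <= A i j) /\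
  (forall i, (i < N)%nat -> A i i = 0) /\
  (forall i j, (i < N)%nat -> (j < N)%nat -> reach N A i j).

Definition is_incidence (N : nat) (A : mat) (E : nat) (B : mat) : Prop :=
  exists src dst : nat -> nat,
    (forall g, (g < E)%nat ->
       (src g < N)%nat /\ (dst g < N)%nat /\ src g <> dst g /\
       A (src g) (dst g) > 0 /\
       B (src g) g = - sqrt (A (src g) (dst g)) /\
       B (dst g) g = sqrt (A (src g) (dst g)) /\
       (forall k, (k < N)%nat -> k <> src g -> k <> dst g -> B k g = 0)) /\
    (forall i j, (i < N)%nat -> (j < N)%nat -> i <> j -> A i j > 0 ->
       exists g, (g < E)%nat /\
         ((src g = i /\ dst g = j) \/ (src g = j /\ dst g = i))) /\
    (forall g g', (g < E)%nat -> (g' < E)%nat ->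
       ((src g = src g' /\ dst g = dst g') \/ (src g = dst g' /\ dst g = src g')) ->
       g = g').

Definition rho (N : nat) (B : mat) (h : vec -> vec) (x : nat -> R -> vec)
  (g : nat) (t : R) : vec :=
  fun l => sumR N (fun j => B j g * h (x j t) l).

Definition vout (q N : nat) (m : nat -> nat) (Bp : mat) (Rm : nat -> mat)
  (B : mat) (h : vec -> vec) (x : nat -> R -> vec)
  (zeta : nat -> R -> vec) (kappa : nat -> R -> R) (g : nat) (t : R) : vec :=
  fun l => sumR (offs m N) (fun c => Hg q N m Bp Rm g l c * zeta g t c)
           + kappa g t * rho N B h x g t l.

Definition uin (q N E : nat) (m : nat -> nat) (Bp : mat) (Rm : nat -> mat)
  (B : mat) (h : vec -> vec) (x : nat -> R -> vec)
  (zeta : nat -> R -> vec) (kappa : nat -> R -> R) (i : nat) (t : R) : vec :=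
  fun l => - sumR E (fun g => B i g * vout q N m Bp Rm B h x zeta kappa g t l).

Definition din (m : nat -> nat) (Rm : nat -> mat) (w : nat -> R -> vec)
  (i : nat) (t : R) : vec :=
  fun l => sumR (m i) (fun k => Rm i l k * w i t k).

Definition ybar (N : nat) (h : vec -> vec) (x : nat -> R -> vec) (t : R) : vec :=
  fun l => / INR N * sumR N (fun j => h (x j t) l).

(* Main.v *)
Require Import Defs.
From Stdlib Require Import Reals Lra Lia Psatz FunctionalExtensionality Classical ClassicalEpsilon.
From Coquelicot Require Compactness.
Open Scope R_scope.


Lemma sumR_ext k F G : (forall j, (j < k)%nat -> F j = G j) -> sumR k F = sumR k G.
Proof. induction k; simpl; intros H; auto. rewrite IHk by (intros; apply H; lia). rewrite H by lia; auto. Qed.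

Lemma sumR_plus k F G : sumR k (fun j => F j + G j) = sumR k F + sumR k G.
Proof. induction k; simpl; [lra|]. rewrite IHk; lra. Qed.

Lemma sumR_minus k F G : sumR k (fun j => F j - G j) = sumR k F - sumR k G.
Proof. induction k; simpl; [lra|]. rewrite IHk; lra. Qed.

Lemma sumR_scal_l k c F : sumR k (fun j => c * F j) = c * sumR k F.
Proof. induction k; simpl; [lra|]. rewrite IHk; lra. Qed.

Lemma sumR_scal_r k c F : sumR k (fun j => F j * c) = sumR k F * c.
Proof. induction k; simpl; [lra|]. rewrite IHk; lra. Qed.

Lemma sumR_opp k F : sumR k (fun j => - F j) = - sumR k F.
Proof. induction k; simpl; [lra|]. rewrite IHk; lra. Qed.

Lemma sumR_zero k : sumR k (fun _ => 0) = 0.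
Proof. induction k; simpl; [lra|]. rewrite IHk; lra. Qed.

Lemma sumR_const k c : sumR k (fun _ => c) = INR k * c.
Proof. induction k; cbn [sumR]; [simpl; lra|]. rewrite IHk, S_INR; lra. Qed.

Lemma sumR_le k F G : (forall j, (j < k)%nat -> F j <= G j) -> sumR k F <= sumR k G.
Proof. induction k; simpl; intros H; [lra|]. specialize (IHk (fun j Hj => H j ltac:(lia))). specialize (H k ltac:(lia)); lra. Qed.

Lemma sumR_nonneg k F : (forall j, (j < k)%nat -> 0 <= F j) -> 0 <= sumR k F.
Proof. intros H. rewrite <- (sumR_zero k). apply sumR_le; auto. Qed.

Lemma sumR_swap a b (F : nat -> nat -> R) :
  sumR a (fun i => sumR b (fun j => F i j)) = sumR b (fun j => sumR a (fun i => F i j)).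
Proof. induction a; simpl. - rewrite sumR_zero; auto. - rewrite IHa, <- sumR_plus; auto. Qed.

Lemma sumR_split a b F : sumR (a + b) F = sumR a F + sumR b (fun k => F (a + k)%nat).
Proof. induction b; simpl. - rewrite Nat.add_0_r; lra. - rewrite Nat.add_succ_r; simpl; rewrite IHb; lra. Qed.

Lemma sumR_delta k i F : (i < k)%nat -> sumR k (fun j => if Nat.eqb j i then F j else 0) = F i.
Proof.
  induction k; intros Hi; [lia|]. simpl. destruct (Nat.eq_dec i k).
  - subst. rewrite Nat.eqb_refl. rewrite (sumR_ext k _ (fun _ => 0)). rewrite sumR_zero; lra.
    intros j Hj. destruct (Nat.eqb_spec j k); [lia|auto].
  - rewrite IHk by lia. destruct (Nat.eqb_spec k i); [lia|lra].
Qed.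

Lemma sumR_delta' k i F : (i < k)%nat -> sumR k (fun j => if Nat.eqb i j then F j else 0) = F i.
Proof. intros; rewrite <- (sumR_delta k i F) by auto. apply sumR_ext; intros. rewrite Nat.eqb_sym; auto. Qed.

Lemma Rabs_sumR k F : Rabs (sumR k F) <= sumR k (fun j => Rabs (F j)).
Proof. induction k; simpl. - rewrite Rabs_R0; lra. - eapply Rle_trans; [apply Rabs_triang|lra]. Qed.

Lemma sumR_term_le k F i : (forall j, (j < k)%nat -> 0 <= F j) -> (i < k)%nat -> F i <= sumR k F.
Proof.
  induction k; intros H Hi; [lia|]. simpl. destruct (Nat.eq_dec i k).
  - subst. assert (0 <= sumR k F) by (apply sumR_nonneg; intros; apply H; lia). lra.
  - assert (F i <= sumR k F) by (apply IHk; [intros; apply H|]; lia). specialize (H k ltac:(lia)); lra.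
Qed.

Lemma sumR_double_term_le a b F i j : (forall i j, (i < a)%nat -> (j < b)%nat -> 0 <= F i j) ->
  (i < a)%nat -> (j < b)%nat -> F i j <= sumR a (fun i => sumR b (fun j => F i j)).
Proof.
  intros H Hi Hj. eapply Rle_trans; [|apply (sumR_term_le a (fun i => sumR b (fun j => F i j)) i)]; auto.
  - apply sumR_term_le; auto.
  - intros; apply sumR_nonneg; auto.
Qed.

Lemma cauchy_schwarz k a b : (sumR k (fun j => a j * b j)) ^ 2 <=
  sumR k (fun j => a j ^ 2) * sumR k (fun j => b j ^ 2).
Proof.
  induction k; cbn [sumR]. - lra.
  - set (S := sumR k (fun j => a j * b j)) in *.
    set (A := sumR k (fun j => a j ^ 2)) in *.
    set (Bs := sumR k (fun j => b j ^ 2)) in *.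
    assert (0 <= A) by (apply sumR_nonneg; intros; nra).
    assert (0 <= Bs) by (apply sumR_nonneg; intros; nra).
    (* (S+ab)^2 <= (A+a^2)(B+b^2) ;  2 S a b <= A b^2 + B a^2 *)
    assert (2 * S * (a k * b k) <= A * b k ^ 2 + Bs * a k ^ 2).
    { assert (Hs: (S * (a k * b k))^2 <= (A * b k ^ 2) * (Bs * a k ^ 2)).
      { replace ((S * (a k * b k))^2) with (S^2 * ((a k * b k)^2)) by ring.
        replace ((A * b k ^ 2) * (Bs * a k ^ 2)) with ((A * Bs) * ((a k * b k)^2)) by ring.
        apply Rmult_le_compat_r; [nra|auto]. }
      assert (0 <= A * b k ^ 2) by nra. assert (0 <= Bs * a k ^ 2) by nra.
      set (X := A * b k ^ 2) in *. set (Y := Bs * a k ^ 2) in *. set (P := S * (a k * b k)) in *.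
      assert (Hq: (2 * P) ^ 2 <= (X + Y) ^ 2).
      { assert (E1: (X+Y)^2 - (2*P)^2 = (X-Y)^2 + 4*(X*Y - P^2)) by ring.
        assert (0 <= (X-Y)^2) by apply pow2_ge_0. lra. }
      replace (2 * S * (a k * b k)) with (2 * P) by (unfold P; ring).
      destruct (Rle_dec (2*P) (X+Y)) as [|Hn]; [auto|]. exfalso.
      assert (X + Y < 2 * P) by lra.
      assert (0 <= X + Y) by lra.
      assert ((X+Y)^2 < (2*P)^2). { simpl. apply Rmult_le_0_lt_compat; lra. }
      lra. }
    assert (E2: (S + a k*b k)^2 = S^2 + 2*S*(a k*b k) + (a k*b k)^2) by ring.
    assert (E3: (A + a k^2)*(Bs + b k^2) = A*Bs + A*b k^2 + Bs*a k^2 + (a k*b k)^2) by ring.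
    lra.
Qed.

Lemma sqrt_sumR_le_sumabs k F : sqrt (sumR k (fun j => F j ^ 2)) <= sumR k (fun j => Rabs (F j)).
Proof.
  assert (H0: 0 <= sumR k (fun j => Rabs (F j))) by (apply sumR_nonneg; intros; apply Rabs_pos).
  rewrite <- (sqrt_pow2 _ H0). apply sqrt_le_1_alt.
  induction k; cbn [sumR]; [lra|].
  assert (0 <= sumR k (fun j => Rabs (F j))) by (apply sumR_nonneg; intros; apply Rabs_pos).
  specialize (IHk H). assert (0 <= Rabs (F k)) by apply Rabs_pos.
  rewrite <- (pow2_abs (F k)).
  nra.
Qed.


Lemma vnorm_nonneg k v : 0 <= vnorm k v.
Proof. apply sqrt_pos. Qed.

Lemma sumsq_nonneg k v : 0 <= sumR k (fun j => v j ^ 2).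
Proof. apply sumR_nonneg; intros; apply pow2_ge_0. Qed.

Lemma vnorm_sq k v : vnorm k v ^ 2 = sumR k (fun j => v j ^ 2).
Proof. unfold vnorm. apply pow2_sqrt, sumsq_nonneg. Qed.

Lemma vnorm_ext k a b : (forall j, (j < k)%nat -> a j = b j) -> vnorm k a = vnorm k b.
Proof. intros H. unfold vnorm. f_equal. apply sumR_ext. intros; rewrite H; auto. Qed.

Lemma coord_le_vnorm k v j : (j < k)%nat -> Rabs (v j) <= vnorm k v.
Proof.
  intros Hj. rewrite <- (sqrt_pow2 (Rabs (v j))) by apply Rabs_pos. unfold vnorm. apply sqrt_le_1_alt.
  rewrite pow2_abs. apply (sumR_term_le k (fun j => v j ^ 2)); auto. intros; apply pow2_ge_0.
Qed.

Lemma vnorm_le_sumabs k v : vnorm k v <= sumR k (fun j => Rabs (v j)).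
Proof. apply sqrt_sumR_le_sumabs. Qed.

Lemma vnorm_mono k a b : (forall j, (j < k)%nat -> Rabs (a j) <= Rabs (b j)) -> vnorm k a <= vnorm k b.
Proof.
  intros H. unfold vnorm. apply sqrt_le_1_alt. apply sumR_le. intros j Hj.
  rewrite <- (pow2_abs (a j)), <- (pow2_abs (b j)). specialize (H j Hj).
  assert (0 <= Rabs (a j)) by apply Rabs_pos. nra.
Qed.

Lemma vnorm_small k v c : 0 < c -> (forall j, (j < k)%nat -> Rabs (v j) <= c) -> vnorm k v < (INR k + 1) * c.
Proof.
  intros Hc H. eapply Rle_lt_trans; [apply vnorm_le_sumabs|].
  eapply Rle_lt_trans; [apply (sumR_le _ _ (fun _ => c)); auto|]. rewrite sumR_const. lra.
Qed.

Lemma fin_min k (P : nat -> R -> Prop) :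
  (forall j, (j < k)%nat -> exists d, d > 0 /\ P j d) ->
  (forall j d d', P j d -> 0 < d' <= d -> P j d') ->
  exists d, d > 0 /\ forall j, (j < k)%nat -> P j d.
Proof.
  intros H Hm. induction k.
  - exists 1; split; [lra|intros; lia].
  - destruct IHk as [d [Hd Hj]]. intros; apply H; lia.
    destruct (H k ltac:(lia)) as [d' [Hd' Hk]].
    exists (Rmin d d'); split. apply Rmin_pos; lra.
    intros j Hj'. destruct (Nat.eq_dec j k).
    + subst. apply (Hm _ d'); auto. split; [apply Rmin_pos; lra| apply Rmin_r].
    + apply (Hm _ d); auto. apply Hj; lia. split; [apply Rmin_pos; lra| apply Rmin_l].
Qed.

Lemma mvt_gen (phi phi' : R -> R) a b :
  (forall r, derivable_pt_lim phi r (phi' r)) ->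
  exists c, phi b - phi a = phi' c * (b - a) /\ Rabs (c - a) <= Rabs (b - a).
Proof.
  intros H. destruct (Rtotal_order a b) as [Hab|[Hab|Hab]].
  - destruct (MVT_cor2 phi phi' a b Hab (fun c _ => H c)) as [c [E Hc]].
    exists c; split; auto. rewrite !Rabs_right by lra. lra.
  - subst. exists b. split; [ring|]. replace (b-b) with 0 by ring. lra.
  - destruct (MVT_cor2 phi phi' b a Hab (fun c _ => H c)) as [c [E Hc]].
    exists c; split. lra. rewrite !Rabs_left by lra. lra.
Qed.

Lemma upd_upd (z : vec) j r r' : upd (upd z j r) j r' = upd z j r'.
Proof. apply functional_extensionality; intros c. unfold upd. destruct (Nat.eqb c j); auto. Qed.

Lemma upd_same (z : vec) j r : upd z j r j = r.
Proof. unfold upd. rewrite Nat.eqb_refl; auto. Qed.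

Lemma upd_id (z : vec) j : upd z j (z j) = z.
Proof. apply functional_extensionality; intros c. unfold upd. destruct (Nat.eqb_spec c j); subst; auto. Qed.

Definition partials (k : nat) (F : vec -> R) (DF : vec -> nat -> R) :=
  forall z j, (j < k)%nat -> derivable_pt_lim (fun r => F (upd z j r)) (z j) (DF z j).
Definition depk (k : nat) (F : vec -> R) :=
  forall z z', (forall c, (c < k)%nat -> z c = z' c) -> F z = F z'.
Definition contDF (k : nat) (DF : vec -> nat -> R) :=
  forall j, (j < k)%nat -> forall z eps, eps > 0 -> exists del, del > 0 /\
    forall z', vnorm k (vsub z' z) < del -> Rabs (DF z' j - DF z j) < eps.

Lemma partials_everywhere k F DF : partials k F DF -> forall z j, (j < k)%nat ->
  forall r, derivable_pt_lim (fun r => F (upd z j r)) r (DF (upd z j r) j).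
Proof.
  intros H z j Hj r. specialize (H (upd z j r) j Hj). rewrite upd_same in H.
  replace (fun r0 => F (upd z j r0)) with (fun r0 => F (upd (upd z j r) j r0)); auto.
  apply functional_extensionality; intros; rewrite upd_upd; auto.
Qed.

Lemma coord_mvt k F DF : depk k F -> partials k F DF ->
  forall z z', exists xi : nat -> vec,
    (forall j c, (j < k)%nat -> (c < k)%nat -> Rabs (xi j c - z c) <= Rabs (z' c - z c)) /\
    F z' - F z = sumR k (fun j => DF (xi j) j * (z' j - z j)).
Proof.
  intros Hd Hp z z'.
  set (mix := fun p => (fun c => if Nat.ltb c p then z' c else z c) : vec).
  assert (Hc: forall p, (p <= k)%nat -> exists xi : nat -> vec,
    (forall j c, (j < p)%nat -> (c < k)%nat -> Rabs (xi j c - z c) <= Rabs (z' c - z c)) /\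
    F (mix p) - F z = sumR p (fun j => DF (xi j) j * (z' j - z j))).
  { induction p; intros Hp'.
    - exists (fun _ => z). split; [intros; lia|]. simpl.
      replace (mix 0%nat) with z; [ring|]. apply functional_extensionality; intros c; unfold mix; simpl.
      destruct c; auto.
    - destruct (IHp ltac:(lia)) as [xi [Hxi E]].
      assert (Em: mix (S p) = upd (mix p) p (z' p)).
      { apply functional_extensionality; intros c; unfold mix, upd.
        destruct (Nat.eqb_spec c p); [subst; rewrite (proj2 (Nat.ltb_lt p (S p))) by lia; auto|].
        destruct (Nat.ltb_spec c (S p)); destruct (Nat.ltb_spec c p); auto; lia. }
      assert (Ez: mix p = upd (mix p) p (z p)).
      { apply functional_extensionality; intros c; unfold mix, upd.
        destruct (Nat.eqb_spec c p); [subst; rewrite (proj2 (Nat.ltb_ge p p)) by lia; auto|auto]. }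
      destruct (mvt_gen (fun r => F (upd (mix p) p r)) (fun r => DF (upd (mix p) p r) p) (z p) (z' p)
        (partials_everywhere k F DF Hp (mix p) p ltac:(lia))) as [c [Ec Hcb]].
      exists (fun j => if Nat.eqb j p then upd (mix p) p c else xi j). split.
      + intros j c' Hj Hc'. destruct (Nat.eqb_spec j p).
        * subst. unfold upd, mix. destruct (Nat.eqb_spec c' p). subst; auto.
          destruct (Nat.ltb_spec c' p). lra. replace (z c' - z c') with 0 by ring. rewrite Rabs_R0; apply Rabs_pos.
        * apply Hxi; lia.
      + cbn [sumR]. rewrite Nat.eqb_refl.
        rewrite (sumR_ext p _ (fun j => DF (xi j) j * (z' j - z j))).
        * rewrite <- E. rewrite Em. rewrite Ez at 2. simpl in Ec. lra.
        * intros j Hj. destruct (Nat.eqb_spec j p); [lia|auto]. }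
  destruct (Hc k ltac:(lia)) as [xi [H1 H2]]. exists xi; split; auto.
  rewrite <- H2. f_equal. apply Hd. intros c Hc'. unfold mix. rewrite (proj2 (Nat.ltb_lt c k)); auto.
Qed.


Lemma prod_err a b A Bv eta : Rabs (a - A) < eta -> Rabs (b - Bv) < eta -> eta <= 1 ->
  Rabs (a * b - A * Bv) <= eta * (Rabs Bv + 1 + Rabs A).
Proof.
  intros H1 H2 He.
  replace (a * b - A * Bv) with ((a - A) * b + A * (b - Bv)) by ring.
  eapply Rle_trans; [apply Rabs_triang|]. rewrite !Rabs_mult.
  assert (Rabs b <= Rabs Bv + 1).
  { replace b with ((b - Bv) + Bv) by ring. eapply Rle_trans; [apply Rabs_triang|lra]. }
  assert (0 <= Rabs (a - A)) by apply Rabs_pos. assert (0 <= Rabs A) by apply Rabs_pos.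
  assert (0 <= Rabs b) by apply Rabs_pos. assert (0 <= Rabs (b - Bv)) by apply Rabs_pos.
  assert (Rabs (a - A) * Rabs b <= eta * (Rabs Bv + 1)) by (apply Rmult_le_compat; lra).
  assert (Rabs A * Rabs (b - Bv) <= Rabs A * eta) by (apply Rmult_le_compat_l; lra).
  lra.
Qed.

Lemma chain_rule k F DF (gam : R -> vec) (gam' : vec) t :
  depk k F -> partials k F DF -> contDF k DF ->
  (forall j, (j < k)%nat -> derivable_pt_lim (fun s => gam s j) t (gam' j)) ->
  derivable_pt_lim (fun s => F (gam s)) t (sumR k (fun j => DF (gam t) j * gam' j)).
Proof.
  intros Hd Hp Hc Hg eps Heps.
  set (A := fun j => DF (gam t) j).
  set (S := sumR k (fun j => Rabs (gam' j) + 1 + Rabs (A j))).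
  assert (HS: 0 <= S) by (apply sumR_nonneg; intros; pose proof (Rabs_pos (gam' j)); pose proof (Rabs_pos (A j)); lra).
  set (eta := Rmin 1 (eps / (S + 1))).
  assert (Heta: 0 < eta) by (apply Rmin_pos; [lra| apply Rdiv_lt_0_compat; lra]).
  assert (Heta1: eta <= 1) by apply Rmin_l.
  assert (Heta2: eta <= eps / (S+1)) by apply Rmin_r.
  destruct (fin_min k (fun j d => forall h, h <> 0 -> Rabs h < d ->
     Rabs ((gam (t+h) j - gam t j)/h - gam' j) < eta)) as [D1 [HD1 P1]].
  { intros j Hj. destruct (Hg j Hj eta Heta) as [dl Hdl]. exists dl; split; [apply cond_pos|]. auto. }
  { intros j d d' H [H1 H2] hh Hh Hl. apply H; auto; lra. }
  destruct (fin_min k (fun j d => forall z', vnorm k (vsub z' (gam t)) < d -> Rabs (DF z' j - A j) < eta))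
    as [D2 [HD2 P2]].
  { intros j Hj. destruct (Hc j Hj (gam t) eta Heta) as [dl [Hdl H]]. exists dl; split; auto. }
  { intros j d d' H [H1 H2] z' Hz. apply H; lra. }
  set (S' := sumR k (fun j => Rabs (gam' j) + 1)).
  assert (HS': 0 <= S') by (apply sumR_nonneg; intros; pose proof (Rabs_pos (gam' j)); lra).
  assert (Hdpos: 0 < Rmin D1 (D2 / (S' + 1))) by (apply Rmin_pos; [lra|apply Rdiv_lt_0_compat; lra]).
  exists (mkposreal _ Hdpos). intros hh Hh Hlt. simpl in Hlt.
  assert (Hl1: Rabs hh < D1) by (eapply Rlt_le_trans; [apply Hlt|apply Rmin_l]).
  assert (Hl2: Rabs hh < D2 / (S' + 1)) by (eapply Rlt_le_trans; [apply Hlt|apply Rmin_r]).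
  assert (Hhpos: 0 < Rabs hh) by (apply Rabs_pos_lt; auto).
  assert (HDel: forall j, (j < k)%nat -> Rabs (gam (t + hh) j - gam t j) <= Rabs hh * (Rabs (gam' j) + 1)).
  { intros j Hj. specialize (P1 j Hj hh Hh Hl1).
    replace (gam (t + hh) j - gam t j) with (hh * ((gam (t + hh) j - gam t j) / hh)) by (field; auto).
    rewrite Rabs_mult. apply Rmult_le_compat_l; [apply Rabs_pos|].
    set (u := (gam (t + hh) j - gam t j) / hh) in *.
    replace u with ((u - gam' j) + gam' j) by ring. eapply Rle_trans; [apply Rabs_triang|lra]. }
  assert (Hv: vnorm k (vsub (gam (t + hh)) (gam t)) < D2).
  { eapply Rle_lt_trans; [apply vnorm_le_sumabs|].
    eapply Rle_lt_trans; [apply (sumR_le _ _ (fun j => Rabs hh * (Rabs (gam' j) + 1))); intros; apply HDel; auto|].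
    rewrite sumR_scal_l. fold S'.
    apply (Rmult_lt_compat_r (S'+1)) in Hl2; [|lra]. unfold Rdiv in Hl2. rewrite Rmult_assoc, Rinv_l in Hl2 by lra.
    nra. }
  destruct (coord_mvt k F DF Hd Hp (gam t) (gam (t + hh))) as [xi [Hxi Exi]].
  rewrite Exi.
  unfold Rdiv at 1. rewrite (Rmult_comm (sumR k _)), <- sumR_scal_l. rewrite <- sumR_minus.
  eapply Rle_lt_trans; [apply Rabs_sumR|].
  eapply Rle_lt_trans; [apply (sumR_le _ _ (fun j => eta * (Rabs (gam' j) + 1 + Rabs (A j))))|].
  - intros j Hj.
    assert (E: / hh * (DF (xi j) j * (gam (t + hh) j - gam t j)) = DF (xi j) j * ((gam (t + hh) j - gam t j) / hh)) by (field; auto).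
    rewrite E.
    apply (prod_err (DF (xi j) j) ((gam (t+hh) j - gam t j)/hh) (A j) (gam' j)); auto.
    apply P2; auto. eapply Rle_lt_trans; [|apply Hv]. apply vnorm_mono. intros c Hc'. unfold vsub. apply Hxi; auto.
  - rewrite sumR_scal_l. fold S.
    apply Rle_lt_trans with (eps / (S+1) * S). apply Rmult_le_compat_r; auto.
    unfold Rdiv. rewrite Rmult_assoc. rewrite (Rmult_comm (/ (S+1))). 
    apply Rlt_le_trans with (eps * 1); [|lra]. apply Rmult_lt_compat_l; auto.
    apply (Rmult_lt_reg_r (S+1)); [lra|]. rewrite Rmult_assoc, Rinv_l by lra. lra.
Qed.


Fixpoint toTn (k : nat) (z : vec) : Compactness.Tn k R :=
  match k with O => tt | S k' => (z 0%nat, toTn k' (fun j => z (S j))) end.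
Fixpoint fromTn (k : nat) : Compactness.Tn k R -> vec :=
  match k with O => fun _ _ => 0
  | S k' => fun p j => match j with O => fst p | S j' => fromTn k' (snd p) j' end end.

Lemma from_to k z j : (j < k)%nat -> fromTn k (toTn k z) j = z j.
Proof.
  revert z j; induction k; intros z j Hj; [lia|]. destruct j; simpl; auto.
  rewrite IHk by lia; auto.
Qed.

Lemma bounded_to k M z : (forall j, (j < k)%nat -> -M <= z j <= M) ->
  Compactness.bounded_n k (toTn k (fun _ => -M)) (toTn k (fun _ => M)) (toTn k z).
Proof.
  revert z; induction k; intros z H; simpl; auto. split.
  - apply H; lia.
  - apply IHk. intros; apply H; lia.
Qed.

Lemma close_from k d x t : Compactness.close_n k d x t ->
  forall j, (j < k)%nat -> Rabs (fromTn k x j - fromTn k t j) < d.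
Proof.
  induction k; intros Hc j Hj; [lia|]. destruct x as [x1 x2], t as [t1 t2]. simpl in Hc.
  destruct Hc as [H1 H2]. destruct j; simpl; auto. apply IHk; auto; lia.
Qed.

Lemma compact_bound k (G : vec -> R) :
  (forall z0, exists r K, r > 0 /\ forall z, vnorm k (vsub z z0) < r -> G z <= K) ->
  forall M, exists K, forall z, (forall j, (j < k)%nat -> Rabs (z j) <= M) -> G z <= K.
Proof.
  intros H M.
  assert (Hs: forall z0 : vec, {p : R * R | fst p > 0 /\ forall z, vnorm k (vsub z z0) < fst p -> G z <= snd p}).
  { intros z0. apply constructive_indefinite_description. destruct (H z0) as [r [K [Hr HK]]].
    exists (r, K); simpl; auto. }
  set (rad := fun z0 => fst (proj1_sig (Hs z0))).
  set (Kb := fun z0 => snd (proj1_sig (Hs z0))).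
  assert (Hrad: forall z0, rad z0 > 0) by (intros z0; exact (proj1 (proj2_sig (Hs z0)))).
  assert (HKb: forall z0 z, vnorm k (vsub z z0) < rad z0 -> G z <= Kb z0)
    by (intros z0; exact (proj2 (proj2_sig (Hs z0)))).
  assert (Hk1: 0 < INR k + 1) by (pose proof (pos_INR k); lra).
  assert (Hdp: forall t : Compactness.Tn k R,
     0 < Rmin (rad (fromTn k t) / (INR k + 1)) (1 / (1 + Rmax 0 (Kb (fromTn k t))))).
  { intros t. apply Rmin_pos. apply Rdiv_lt_0_compat; [apply Hrad|auto]. apply Rdiv_lt_0_compat; [lra|].
    pose proof (Rmax_l 0 (Kb (fromTn k t))); lra. }
  set (delta := fun t => mkposreal _ (Hdp t)).
  destruct (Compactness.compactness_value k (toTn k (fun _ => -M)) (toTn k (fun _ => M)) delta) as [d Hd].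
  exists (1 / d). intros z Hz.
  apply NNPP. intros Hn.
  apply (Hd (toTn k z)).
  { apply bounded_to. intros j Hj. specialize (Hz j Hj). pose proof (Rle_abs (z j)); pose proof (Rle_abs (- z j)); rewrite Rabs_Ropp in *; lra. }
  intros [t [Ht [Hcl Hdt]]].
  apply Hn. simpl in Hdt.
  assert (Hd1: d <= 1 / (1 + Rmax 0 (Kb (fromTn k t)))) by (eapply Rle_trans; [apply Hdt|apply Rmin_r]).
  assert (Hd2: pos (delta t) <= rad (fromTn k t) / (INR k + 1)) by apply Rmin_l.
  assert (HG: G z <= Kb (fromTn k t)).
  { apply HKb. replace (rad (fromTn k t)) with ((INR k + 1) * (rad (fromTn k t) / (INR k + 1))) by (field; lra).
    apply vnorm_small. apply Rdiv_lt_0_compat; [apply Hrad|auto].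
    intros j Hj. pose proof (close_from k _ _ _ Hcl j Hj) as Hc. rewrite from_to in Hc by auto.
    unfold vsub. lra. }
  pose proof (Rmax_r 0 (Kb (fromTn k t))). pose proof (Rmax_l 0 (Kb (fromTn k t))).
  set (KK := Rmax 0 (Kb (fromTn k t))) in *.
  pose proof (cond_pos d).
  assert (1 + KK <= 1 / d).
  { apply (Rmult_le_reg_r d); [lra|]. unfold Rdiv. rewrite Rmult_assoc, Rinv_l by lra.
    apply (Rmult_le_compat_l (1 + KK)) in Hd1; [|lra].
    replace ((1 + KK) * (1 / (1 + KK))) with 1 in Hd1 by (field; lra). lra. }
  lra.
Qed.


Lemma colsum_zero N A E B : is_incidence N A E B ->
  forall g, (g < E)%nat -> sumR N (fun k => B k g) = 0.
Proof.
  intros [src [dst [H1 _]]] g Hg. destruct (H1 g Hg) as [Hs [Hd [Hne [Ha [Bs [Bd Bo]]]]]].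
  rewrite (sumR_ext N _ (fun k => (if Nat.eqb k (src g) then B (src g) g else 0) +
                                  (if Nat.eqb k (dst g) then B (dst g) g else 0))).
  - rewrite sumR_plus. rewrite (sumR_delta N (src g) (fun _ => B (src g) g)) by auto.
    rewrite (sumR_delta N (dst g) (fun _ => B (dst g) g)) by auto. lra.
  - intros k Hk. destruct (Nat.eqb_spec k (src g)); destruct (Nat.eqb_spec k (dst g)); subst; try lia.
    + lra. + lra. + rewrite Bo by auto; lra.
Qed.

Lemma Pform N A E B Bp : (0 < N)%nat -> graph_ok N A -> is_incidence N A E B -> is_pinv N E B Bp ->
  forall i j, (i < N)%nat -> (j < N)%nat ->
  sumR E (fun g => B i g * Bp g j) = (if Nat.eqb i j then 1 else 0) - / INR N.
Proof.
  intros HN HA HB [Hp1 [Hp2 [Hp3 Hp4]]].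
  set (P := fun i j => sumR E (fun g => B i g * Bp g j)).
  assert (Psym: forall i j, (i < N)%nat -> (j < N)%nat -> P i j = P j i).
  { intros i j Hi Hj. symmetry. exact (Hp3 i j Hi Hj). }
  assert (PB: forall i g, (i < N)%nat -> (g < E)%nat -> sumR N (fun k => P i k * B k g) = B i g).
  { intros i g Hi Hg. exact (Hp1 i g Hi Hg). }
  assert (BpP: forall g j, (g < E)%nat -> (j < N)%nat -> sumR N (fun k => Bp g k * P k j) = Bp g j).
  { intros g j Hg Hj. rewrite <- (Hp2 g j Hg Hj). unfold mmul, P.
    rewrite (sumR_ext N _ (fun k => sumR E (fun e => Bp g k * B k e * Bp e j))).
    - rewrite sumR_swap. apply sumR_ext. intros e He. rewrite <- sumR_scal_r. auto.
    - intros k Hk. rewrite <- sumR_scal_l. apply sumR_ext; intros; ring. }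
  assert (CS := colsum_zero N A E B HB).
  assert (RBp: forall g, (g < E)%nat -> sumR N (fun j => Bp g j) = 0).
  { intros g Hg. rewrite (sumR_ext N _ (fun j => sumR N (fun k => Bp g k * P k j))) by (intros; rewrite BpP; auto).
    rewrite sumR_swap. rewrite (sumR_ext N _ (fun _ => 0)); [apply sumR_zero|].
    intros k Hk. rewrite sumR_scal_l.
    rewrite (sumR_ext N _ (fun j => P j k)) by (intros; apply Psym; auto).
    unfold P. rewrite sumR_swap.
    rewrite (sumR_ext E _ (fun _ => 0)); [rewrite sumR_zero; ring|].
    intros e He. rewrite sumR_scal_r, CS by auto. ring. }
  assert (RP: forall i, (i < N)%nat -> sumR N (fun j => P i j) = 0).
  { intros i Hi. unfold P. rewrite sumR_swap.
    rewrite (sumR_ext E _ (fun _ => 0)); [apply sumR_zero|].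
    intros e He. rewrite sumR_scal_l, RBp by auto. ring. }
  assert (HNr: INR N <> 0) by (apply not_0_INR; lia).
  intros i0 j Hi0 Hj.
  set (z := fun i => (if Nat.eqb i j then 1 else 0) - / INR N - P i j).
  assert (Bz: forall g, (g < E)%nat -> sumR N (fun i => B i g * z i) = 0).
  { intros g Hg. unfold z.
    rewrite (sumR_ext N _ (fun i => (if Nat.eqb i j then B j g else 0) - B i g * / INR N - P j i * B i g)).
    - rewrite !sumR_minus, sumR_scal_r, CS, sumR_delta, PB by auto. ring.
    - intros i Hi. rewrite (Psym j i) by auto. destruct (Nat.eqb_spec i j); subst; ring. }
  destruct HB as [src [dst [H1 [H2 H3]]]].
  assert (Edge: forall g, (g < E)%nat -> z (src g) = z (dst g)).
  { intros g Hg. pose proof (Bz g Hg) as Hb. destruct (H1 g Hg) as [Hs [Hd [Hne [Ha [Bs [Bd Bo]]]]]].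
    rewrite (sumR_ext N _ (fun k => (if Nat.eqb k (src g) then B (src g) g * z (src g) else 0) +
                                  (if Nat.eqb k (dst g) then B (dst g) g * z (dst g) else 0))) in Hb.
    - rewrite sumR_plus in Hb. rewrite (sumR_delta N (src g) (fun _ => _)) in Hb by auto.
      rewrite (sumR_delta N (dst g) (fun _ => _)) in Hb by auto. rewrite Bs, Bd in Hb.
      assert (0 < sqrt (A (src g) (dst g))) by (apply sqrt_lt_R0; lra).
      assert (sqrt (A (src g) (dst g)) * (z (dst g) - z (src g)) = 0) by lra.
      apply Rmult_integral in H0. lra.
    - intros k Hk. destruct (Nat.eqb_spec k (src g)); destruct (Nat.eqb_spec k (dst g)); subst; try lia.
      + lra. + lra. + rewrite Bo by auto; lra. }
  destruct HA as [HA1 [HA2 HA3]].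
  assert (Const: forall k, (k < N)%nat -> z k = z 0%nat).
  { intros k Hk. pose proof (HA3 0%nat k HN Hk) as Hr.
    assert (forall k, reach N A 0 k -> (k < N)%nat /\ z k = z 0%nat).
    { intros k' Hr'. induction Hr'. split; auto.
      destruct IHHr' as [Hj0 Hz]. split; auto.
      destruct (Nat.eq_dec j0 k0). subst; auto.
      destruct (H2 j0 k0 Hj0 H n H0) as [g [Hg [[Es Ed]|[Es Ed]]]].
      - rewrite <- Hz, <- Es, <- Ed. symmetry; apply Edge; auto.
      - rewrite <- Hz, <- Es, <- Ed. apply Edge; auto. }
    apply H; auto. }
  assert (Sz: sumR N z = 0).
  { unfold z. rewrite !sumR_minus, sumR_const.
    rewrite (sumR_delta N j (fun _ => 1)) by auto.
    rewrite (sumR_ext N _ (fun i => P j i)) by (intros; apply Psym; auto). rewrite RP by auto. field; auto. }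
  rewrite (sumR_ext N z (fun _ => z 0%nat)) in Sz by (intros; apply Const; auto).
  rewrite sumR_const in Sz. assert (z 0%nat = 0) by (apply Rmult_integral in Sz; destruct Sz; [contradiction|auto]).
  pose proof (Const i0 Hi0) as Hc0. rewrite H in Hc0. unfold z in Hc0. fold (P i0 j). lra.
Qed.


Lemma offs_S m i : offs m (S i) = (offs m i + m i)%nat.
Proof. reflexivity. Qed.

Lemma offs_mono m a b : (a <= b)%nat -> (offs m a <= offs m b)%nat.
Proof. induction 1; auto. rewrite offs_S; lia. Qed.

Lemma inblk_iff m j i k : (k < m i)%nat -> inblk m j (offs m i + k) = Nat.eqb j i.
Proof.
  intros Hk. unfold inblk. destruct (Compare_dec.lt_eq_lt_dec j i) as [[Hl|He]|Hg].
  - pose proof (offs_mono m (S j) i Hl). rewrite offs_S in H.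
    rewrite (proj2 (Nat.ltb_ge _ _)) by lia. rewrite Bool.andb_false_r.
    symmetry; apply Nat.eqb_neq; lia.
  - subst. rewrite Nat.eqb_refl. rewrite (proj2 (Nat.leb_le _ _)) by lia. rewrite (proj2 (Nat.ltb_lt _ _)) by lia. auto.
  - pose proof (offs_mono m (S i) j Hg). rewrite offs_S in H.
    rewrite (proj2 (Nat.leb_gt _ _)) by lia. simpl. symmetry; apply Nat.eqb_neq; lia.
Qed.

Lemma blk_lt m N i k : (i < N)%nat -> (k < m i)%nat -> (offs m i + k < offs m N)%nat.
Proof. intros Hi Hk. pose proof (offs_mono m (S i) N Hi). rewrite offs_S in H. lia. Qed.

Lemma sumR_offs m N F : sumR (offs m N) F = sumR N (fun i => sumR (m i) (fun k => F (offs m i + k)%nat)).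
Proof. induction N; [reflexivity|]. rewrite offs_S, sumR_split, IHN. reflexivity. Qed.

Lemma sumR_mul a b F : sumR (a * b) F = sumR a (fun i => sumR b (fun j => F (i * b + j)%nat)).
Proof. induction a; [reflexivity|]. rewrite Nat.mul_succ_l, sumR_split, IHa. reflexivity. Qed.

Lemma divq a b q : (b < q)%nat -> ((a * q + b) / q = a /\ (a * q + b) mod q = b)%nat.
Proof. intros H. split; [symmetry; apply (Nat.div_unique _ _ _ b)|symmetry; apply (Nat.mod_unique _ _ a)]; auto; lia. Qed.

Lemma sstack_blk N m s z i k : (i < N)%nat -> (k < m i)%nat ->
  sstack N m s z (offs m i + k)%nat = s i (fun k' => z (offs m i + k')%nat) k.
Proof.
  intros Hi Hk. unfold sstack.
  rewrite (sumR_ext N _ (fun j => if Nat.eqb j i then s i (fun k' => z (offs m i + k')%nat) k else 0)).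
  - apply (sumR_delta N i (fun _ => _)); auto.
  - intros j Hj. rewrite inblk_iff by auto. destruct (Nat.eqb_spec j i); subst; auto.
    f_equal. lia.
Qed.

Lemma Hg_blk q N m Bp Rm g l j k : (l < q)%nat -> (j < N)%nat -> (k < m j)%nat ->
  Hg q N m Bp Rm g l (offs m j + k)%nat = Bp g j * Rm j l k.
Proof.
  intros Hl Hj Hk. unfold Hg, Hmat, mmul, kron, blockdiag. rewrite sumR_mul.
  destruct (divq g l q Hl) as [E1 E2]. rewrite E1, E2.
  rewrite (sumR_ext N _ (fun j' => if Nat.eqb j' j then Bp g j * Rm j l k else 0)).
  - apply (sumR_delta N j (fun _ => _)); auto.
  - intros j' Hj'. rewrite (sumR_ext q _ (fun l' => if Nat.eqb l l' then
        (if Nat.eqb j' j then Bp g j * Rm j l k else 0) else 0)).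
    + apply (sumR_delta' q l (fun _ => _)); auto.
    + intros l' Hl'. destruct (divq j' l' q Hl') as [E3 E4]. rewrite E3, E4.
      rewrite inblk_iff by auto. rewrite (proj2 (Nat.ltb_lt j' N)) by auto. simpl.
      unfold idm. destruct (Nat.eqb_spec l l'); destruct (Nat.eqb_spec j' j); subst; try ring.
      replace (offs m j + k - offs m j)%nat with k by lia. ring.
Qed.


Lemma barbalat (V V' Q : R -> R) LQ :
  (forall t, 0 < t -> derivable_pt_lim V t (V' t)) ->
  (forall t, 0 < t -> V' t <= - Q t) ->
  (forall t, 0 < t -> 0 <= V t) ->
  (forall t, 1 <= t -> 0 <= Q t) ->
  (forall t s, 1 <= t -> 1 <= s -> Rabs (Q t - Q s) <= LQ * Rabs (t - s)) ->
  forall eps, eps > 0 -> exists T, forall t, t >= T -> Q t < eps.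
Proof.
  intros HV HV' HV0 HQ0 HL eps Heps.
  apply NNPP; intros Hn.
  assert (Hinf: forall T, exists t, t >= T /\ Q t >= eps).
  { intros T. apply NNPP; intros H2. apply Hn. exists T. intros t Ht.
    apply Rnot_le_lt. intros H3. apply H2. exists t; split; lra. }
  set (L := Rabs LQ + 1).
  assert (HLp: 0 < L) by (unfold L; pose proof (Rabs_pos LQ); lra).
  set (del := eps / (2 * L)).
  assert (Hdel: 0 < del) by (apply Rdiv_lt_0_compat; lra).
  assert (Hmono: forall r s, 1 <= r -> r <= s -> V s <= V r).
  { intros r s Hr Hrs. destruct (Rle_lt_or_eq_dec _ _ Hrs) as [Hlt|He]; [|subst; lra].
    destruct (MVT_cor2 V V' r s Hlt (fun c Hc => HV c ltac:(lra))) as [c [Ec Hc]].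
    assert (V' c <= 0) by (pose proof (HV' c ltac:(lra)); pose proof (HQ0 c ltac:(lra)); lra).
    assert (V' c * (s - r) <= 0 * (s - r)) by (apply Rmult_le_compat_r; lra). lra. }
  assert (Hdec: forall t, 1 <= t -> Q t >= eps -> V (t + del) <= V t - eps * del / 2).
  { intros t Ht HQt.
    destruct (MVT_cor2 V V' t (t + del) ltac:(lra) (fun c Hc => HV c ltac:(lra))) as [c [Ec Hc]].
    assert (HQc: Q c >= eps / 2).
    { pose proof (HL c t ltac:(lra) ltac:(lra)) as Hl.
      rewrite (Rabs_right (c - t)) in Hl by lra.
      assert (LQ * (c - t) <= L * del).
      { apply Rle_trans with (Rabs LQ * (c - t)). apply Rmult_le_compat_r; [lra|apply Rle_abs].
        apply Rmult_le_compat; [apply Rabs_pos|lra|unfold L; lra|lra]. }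
      assert (L * del = eps / 2) by (unfold del; field; lra).
      assert (Q t - Q c <= Rabs (Q c - Q t)) by (rewrite Rabs_minus_sym; apply Rle_abs). lra. }
    pose proof (HV' c ltac:(lra)).
    assert (V' c * (t + del - t) <= - (eps / 2) * del) by (replace (t + del - t) with del by ring; apply Rmult_le_compat_r; lra).
    lra. }
  assert (Hk: forall k, exists T, T >= 1 /\ V T <= V 1 - INR k * (eps * del / 2)).
  { induction k. - exists 1; simpl; split; lra.
    - destruct IHk as [T [HT HVT]]. destruct (Hinf T) as [t [Ht HQt]].
      exists (t + del). split; [lra|]. pose proof (Hdec t ltac:(lra) HQt). pose proof (Hmono T t ltac:(lra) ltac:(lra)).
      rewrite S_INR. lra. }
  assert (Hc: 0 < eps * del / 2) by (apply Rdiv_lt_0_compat; [nra|lra]).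
  destruct (archimed (V 1 / (eps * del / 2))) as [Ha _].
  set (u := up (V 1 / (eps * del / 2))) in *.
  destruct (Hk (Z.to_nat u)) as [T [HT HVT]].
  pose proof (HV0 T ltac:(lra)).
  assert (Hup: (0 <= u)%Z).
  { apply le_IZR. assert (0 <= V 1 / (eps * del / 2)) by (unfold Rdiv; apply Rmult_le_pos; [apply HV0; lra|apply Rlt_le, Rinv_0_lt_compat; lra]). lra. }
  rewrite INR_IZR_INZ, Znat.Z2Nat.id in HVT by auto.
  assert (V 1 < IZR u * (eps * del / 2)).
  { apply (Rmult_lt_compat_r (eps * del / 2)) in Ha; auto. unfold Rdiv at 1 in Ha.
    rewrite Rmult_assoc, Rinv_l in Ha by lra. lra. }
  lra.
Qed.


Lemma fin_max k (P : nat -> R -> Prop) :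
  (forall j, (j < k)%nat -> exists K, P j K) ->
  (forall j K K', P j K -> K <= K' -> P j K') ->
  exists K, forall j, (j < k)%nat -> P j K.
Proof.
  intros H Hm. induction k.
  - exists 0; intros; lia.
  - destruct IHk as [K HK]. intros; apply H; lia.
    destruct (H k ltac:(lia)) as [K' HK'].
    exists (Rmax K K'). intros j Hj. destruct (Nat.eq_dec j k).
    + subst. apply (Hm _ K'); auto. apply Rmax_r.
    + apply (Hm _ K); [apply HK; lia|apply Rmax_l].
Qed.

Lemma deriv_sumR k (F : nat -> R -> R) (F' : nat -> R) t :
  (forall j, (j < k)%nat -> derivable_pt_lim (F j) t (F' j)) ->
  derivable_pt_lim (fun s => sumR k (fun j => F j s)) t (sumR k F').
Proof.
  induction k; intros H; simpl.
  - apply (derivable_pt_lim_const 0 t).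
  - apply (derivable_pt_lim_plus (fun s => sumR k (fun j => F j s)) (F k)).
    apply IHk; intros; apply H; lia. apply H; lia.
Qed.

Lemma dpl_plus (f g : R -> R) a b t : derivable_pt_lim f t a -> derivable_pt_lim g t b ->
  derivable_pt_lim (fun s => f s + g s) t (a + b).
Proof. intros; apply (derivable_pt_lim_plus f g); auto. Qed.
Lemma dpl_minus (f g : R -> R) a b t : derivable_pt_lim f t a -> derivable_pt_lim g t b ->
  derivable_pt_lim (fun s => f s - g s) t (a - b).
Proof. intros; apply (derivable_pt_lim_minus f g); auto. Qed.
Lemma dpl_mult (f g : R -> R) a b t : derivable_pt_lim f t a -> derivable_pt_lim g t b ->
  derivable_pt_lim (fun s => f s * g s) t (a * g t + f t * b).
Proof. intros; apply (derivable_pt_lim_mult f g); auto. Qed.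
Lemma dpl_const c t : derivable_pt_lim (fun _ => c) t 0.
Proof. apply (derivable_pt_lim_const c t). Qed.
Lemma dpl_scal c (f : R -> R) a t : derivable_pt_lim f t a -> derivable_pt_lim (fun s => c * f s) t (c * a).
Proof. intros H. replace (c * a) with (0 * f t + c * a) by ring. apply dpl_mult; auto. apply dpl_const. Qed.
Lemma dpl_ext (f g : R -> R) a b t : (forall s, f s = g s) -> a = b -> derivable_pt_lim f t a -> derivable_pt_lim g t b.
Proof. intros H1 H2 H. replace g with f by (apply functional_extensionality; auto). subst; auto. Qed.
Lemma dpl_sq_half (f : R -> R) a t : derivable_pt_lim f t a -> derivable_pt_lim (fun s => f s ^ 2 / 2) t (f t * a).
Proof.
  intros H. apply (dpl_ext (fun s => / 2 * (f s * f s)) _ (/2 * (a * f t + f t * a))).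
  intros; field. field. apply dpl_scal, dpl_mult; auto.
Qed.

Lemma vnorm_zero k v : (forall j, (j < k)%nat -> v j = 0) -> vnorm k v = 0.
Proof.
  intros H. unfold vnorm. rewrite (sumR_ext k _ (fun _ => 0)). rewrite sumR_zero. apply sqrt_0.
  intros j Hj; rewrite H; auto; ring.
Qed.

Lemma coord_zero_of_vnorm k v j : vnorm k v <= 0 -> (j < k)%nat -> v j = 0.
Proof. intros H Hj. pose proof (coord_le_vnorm k v j Hj). pose proof (Rabs_pos (v j)).
  destruct (Req_dec (v j) 0); auto. exfalso. pose proof (Rabs_no_R0 _ H2). lra. Qed.

Lemma f_dep n q f : locLip_f n q f -> forall x x' u u' d d',
  (forall k, (k < n)%nat -> x k = x' k) -> (forall l, (l < q)%nat -> u l = u' l) ->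
  (forall l, (l < q)%nat -> d l = d' l) -> forall k, (k < n)%nat -> f x u d k = f x' u' d' k.
Proof.
  intros Hf x x' u u' d d' Hx Hu Hd k Hk.
  destruct (Hf x u d) as [rad [Hrad [L HL]]].
  assert (E0: dist3 n q x u d x u d = 0).
  { unfold dist3. rewrite !(vnorm_zero _ (vsub _ _)) by (intros; unfold vsub; ring).
    replace (0^2+0^2+0^2) with 0 by ring. apply sqrt_0. }
  assert (E1: dist3 n q x u d x' u' d' = 0).
  { unfold dist3. rewrite (vnorm_zero n (vsub x x')) by (intros; unfold vsub; rewrite Hx by auto; ring).
    rewrite (vnorm_zero q (vsub u u')) by (intros; unfold vsub; rewrite Hu by auto; ring).
    rewrite (vnorm_zero q (vsub d d')) by (intros; unfold vsub; rewrite Hd by auto; ring).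
    replace (0^2+0^2+0^2) with 0 by ring. apply sqrt_0. }
  assert (E2: dist3 n q x' u' d' x u d = 0).
  { unfold dist3. rewrite (vnorm_zero n (vsub x' x)) by (intros; unfold vsub; rewrite Hx by auto; ring).
    rewrite (vnorm_zero q (vsub u' u)) by (intros; unfold vsub; rewrite Hu by auto; ring).
    rewrite (vnorm_zero q (vsub d' d)) by (intros; unfold vsub; rewrite Hd by auto; ring).
    replace (0^2+0^2+0^2) with 0 by ring. apply sqrt_0. }
  specialize (HL x u d x' u' d' ltac:(lra) ltac:(lra)). rewrite E1, Rmult_0_r in HL.
  pose proof (coord_zero_of_vnorm n _ k HL Hk). unfold vsub in H; lra.
Qed.

Lemma s_dep mi si : locLip mi mi si -> forall w w', (forall k, (k < mi)%nat -> w k = w' k) ->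
  forall k, (k < mi)%nat -> si w k = si w' k.
Proof.
  intros Hs w w' Hw k Hk. destruct (Hs w) as [rad [Hrad [L HL]]].
  assert (E0: vnorm mi (vsub w w) = 0) by (apply vnorm_zero; intros; unfold vsub; ring).
  assert (E1: vnorm mi (vsub w' w) = 0) by (apply vnorm_zero; intros; unfold vsub; rewrite Hw by auto; ring).
  assert (E2: vnorm mi (vsub w w') = 0) by (apply vnorm_zero; intros; unfold vsub; rewrite Hw by auto; ring).
  specialize (HL w w' ltac:(lra) ltac:(lra)). rewrite E2, Rmult_0_r in HL.
  pose proof (coord_zero_of_vnorm mi _ k HL Hk). unfold vsub in H; lra.
Qed.

Lemma vnorm_split_l a b v : vnorm a v <= vnorm (a + b) v.
Proof. unfold vnorm. apply sqrt_le_1_alt. rewrite sumR_split.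
  pose proof (sumsq_nonneg b (fun k => v (a + k)%nat)). lra. Qed.
Lemma vnorm_split_r a b v : vnorm b (fun k => v (a + k)%nat) <= vnorm (a + b) v.
Proof. unfold vnorm. apply sqrt_le_1_alt. rewrite sumR_split.
  pose proof (sumsq_nonneg a v). lra. Qed.

Definition pk (n : nat) (a b : vec) : vec := fun c => if Nat.ltb c n then a c else b (c - n)%nat.
Definition shiftn (n : nat) (z : vec) : vec := fun c => z (n + c)%nat.

Lemma shiftn_pk n a b : shiftn n (pk n a b) = b.
Proof. apply functional_extensionality; intros c. unfold shiftn, pk.
  rewrite (proj2 (Nat.ltb_ge _ _)) by lia. f_equal; lia. Qed.

Lemma phi_pair_chain n Phi D1 D2 (a b : R -> vec) (a' b' : vec) t :
  C1pair n Phi D1 D2 ->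
  (forall c, (c < n)%nat -> derivable_pt_lim (fun s => a s c) t (a' c)) ->
  (forall c, (c < n)%nat -> derivable_pt_lim (fun s => b s c) t (b' c)) ->
  derivable_pt_lim (fun s => Phi (a s) (b s)) t
    (dot n (D1 (pk n (a t) (b t)) (b t)) a' + dot n (D2 (pk n (a t) (b t)) (b t)) b').
Proof.
  intros [Hdep [Hpar Hcont]] Ha Hb.
  set (F := fun z => Phi z (shiftn n z)).
  set (DF := fun z j => if Nat.ltb j n then D1 z (shiftn n z) j else D2 z (shiftn n z) (j - n)%nat).
  assert (Hd: depk (n + n) F).
  { intros z z' Hz. unfold F. apply Hdep. intros k Hk. unfold shiftn. split; apply Hz; lia. }
  assert (Hp: partials (n + n) F DF).
  { intros z j Hj. unfold F, DF. destruct (Nat.ltb_spec j n).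
    - assert (E: forall r, shiftn n (upd z j r) = shiftn n z).
      { intros r; apply functional_extensionality; intros c; unfold shiftn, upd.
        rewrite (proj2 (Nat.eqb_neq _ _)) by lia; auto. }
      eapply (dpl_ext (fun r => Phi (upd z j r) (shiftn n z))); [intros; rewrite E; auto|reflexivity|].
      apply (proj1 (Hpar z (shiftn n z) j H)).
    - assert (E: forall r, shiftn n (upd z j r) = upd (shiftn n z) (j - n) r).
      { intros r; apply functional_extensionality; intros c; unfold shiftn, upd.
        destruct (Nat.eqb_spec (n + c) j); destruct (Nat.eqb_spec c (j - n)); auto; lia. }
      assert (E2: z j = shiftn n z (j - n)%nat) by (unfold shiftn; f_equal; lia).
      rewrite E2.
      eapply (dpl_ext (fun r => Phi z (upd (shiftn n z) (j - n) r))).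
      + intros r. rewrite E. apply Hdep. intros k Hk. split; auto. unfold upd.
        rewrite (proj2 (Nat.eqb_neq k j)) by lia; auto.
      + reflexivity.
      + apply (proj2 (Hpar z (shiftn n z) (j - n)%nat ltac:(lia))). }
  assert (Hc: contDF (n + n) DF).
  { intros j Hj z eps Heps. unfold DF. destruct (Nat.ltb_spec j n).
    - destruct (Hcont j H z (shiftn n z) eps Heps) as [del [Hdel Hd']].
      exists del; split; auto. intros z' Hz'. apply Hd'.
      + eapply Rle_lt_trans; [apply vnorm_split_l|apply Hz'].
      + eapply Rle_lt_trans; [|apply Hz']. apply (vnorm_split_r n n (vsub z' z)).
    - destruct (Hcont (j - n)%nat ltac:(lia) z (shiftn n z) eps Heps) as [del [Hdel Hd']].
      exists del; split; auto. intros z' Hz'. apply Hd'.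
      + eapply Rle_lt_trans; [apply vnorm_split_l|apply Hz'].
      + eapply Rle_lt_trans; [|apply Hz']. apply (vnorm_split_r n n (vsub z' z)). }
  assert (Hg: forall j, (j < n + n)%nat -> derivable_pt_lim (fun s => pk n (a s) (b s) j) t (pk n a' b' j)).
  { intros j Hj. unfold pk. destruct (Nat.ltb_spec j n). apply Ha; auto. apply Hb; lia. }
  pose proof (chain_rule (n + n) F DF (fun s => pk n (a s) (b s)) (pk n a' b') t Hd Hp Hc Hg) as HC.
  eapply dpl_ext; [| |apply HC].
  - intros s. unfold F. rewrite shiftn_pk. apply Hdep. intros k Hk. unfold pk.
    rewrite (proj2 (Nat.ltb_lt _ _)) by auto. auto.
  - rewrite sumR_split. unfold DF, dot. rewrite shiftn_pk. f_equal.
    + apply sumR_ext. intros j Hj. rewrite (proj2 (Nat.ltb_lt _ _)) by auto. unfold pk.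
      rewrite (proj2 (Nat.ltb_lt _ _)) by auto. auto.
    + apply sumR_ext. intros j Hj. rewrite (proj2 (Nat.ltb_ge _ _)) by lia. unfold pk.
      rewrite (proj2 (Nat.ltb_ge _ _)) by lia. replace (n + j - n)%nat with j by lia. auto.
Qed.


Lemma pairsum N (a b : nat -> R) :
  sumR N (fun i => sumR N (fun j => (a i - a j) * (b i - b j))) =
  2 * INR N * sumR N (fun i => a i * b i) - 2 * sumR N a * sumR N b.
Proof.
  rewrite (sumR_ext N _ (fun i => INR N * (a i * b i) - a i * sumR N b - b i * sumR N a
                                  + sumR N (fun j => a j * b j))).
  - rewrite sumR_plus, !sumR_minus, sumR_const, !sumR_scal_l, !sumR_scal_r. ring.
  - intros i Hi. rewrite (sumR_ext N _ (fun j => a i * b i - a i * b j - b i * a j + a j * b j)) by (intros; ring).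
    rewrite sumR_plus, !sumR_minus, sumR_const, !sumR_scal_l. ring.
Qed.

Lemma y_dev N E B Bp (Y : nat -> R) :
  (forall i j, (i < N)%nat -> (j < N)%nat ->
     sumR E (fun g => B i g * Bp g j) = (if Nat.eqb i j then 1 else 0) - / INR N) ->
  forall i, (i < N)%nat ->
  Y i - / INR N * sumR N Y = sumR E (fun g => Bp g i * sumR N (fun j => B j g * Y j)).
Proof.
  intros HP i Hi.
  rewrite (sumR_ext E _ (fun g => sumR N (fun j => B j g * Bp g i * Y j))).
  2: { intros g Hg. rewrite <- sumR_scal_l. apply sumR_ext; intros; ring. }
  rewrite sumR_swap.
  rewrite (sumR_ext N (fun j => sumR E (fun g => B j g * Bp g i * Y j)) (fun j => ((if Nat.eqb j i then Y j else 0) - / INR N * Y j))).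
  - rewrite sumR_minus, sumR_scal_l. rewrite (sumR_delta N i Y) by auto. reflexivity.
  - intros j Hj. rewrite sumR_scal_r, HP by auto. destruct (Nat.eqb j i); ring.
Qed.

Lemma h_locbd n (H : vec -> R) (DH : vec -> nat -> R) :
  depk n H -> partials n H DH -> contDF n DH ->
  forall z0, exists r K, r > 0 /\ forall z, vnorm n (vsub z z0) < r -> Rabs (H z) <= K.
Proof.
  intros Hd Hp Hc z0.
  destruct (fin_min n (fun j d => forall z', vnorm n (vsub z' z0) < d -> Rabs (DH z' j - DH z0 j) < 1))
    as [D [HD PD]].
  { intros j Hj. destruct (Hc j Hj z0 1 ltac:(lra)) as [d [Hd' Hd'']]. exists d; split; auto. }
  { intros j d d' Hx [H1 H2] z' Hz'. apply Hx; lra. }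
  exists (Rmin D 1), (Rabs (H z0) + sumR n (fun j => Rabs (DH z0 j) + 1)). split.
  { apply Rmin_pos; lra. }
  intros z Hz. destruct (coord_mvt n H DH Hd Hp z0 z) as [xi [Hxi E]].
  replace (H z) with (H z0 + sumR n (fun j => DH (xi j) j * (z j - z0 j))) by lra.
  eapply Rle_trans; [apply Rabs_triang|]. apply Rplus_le_compat_l.
  eapply Rle_trans; [apply Rabs_sumR|]. apply sumR_le. intros j Hj. rewrite Rabs_mult.
  assert (Hv: vnorm n (vsub (xi j) z0) < D).
  { eapply Rle_lt_trans; [|eapply Rlt_le_trans; [apply Hz|apply Rmin_l]].
    apply vnorm_mono. intros c Hc'. unfold vsub. apply Hxi; auto. }
  specialize (PD j Hj (xi j) Hv).
  assert (Rabs (DH (xi j) j) <= Rabs (DH z0 j) + 1).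
  { replace (DH (xi j) j) with ((DH (xi j) j - DH z0 j) + DH z0 j) by ring.
    eapply Rle_trans; [apply Rabs_triang|lra]. }
  assert (Rabs (z j - z0 j) <= 1).
  { eapply Rle_trans; [apply (coord_le_vnorm n (vsub z z0) j Hj)|].
    left. eapply Rlt_le_trans; [apply Hz|apply Rmin_r]. }
  replace (Rabs (DH z0 j) + 1) with ((Rabs (DH z0 j) + 1) * 1) by ring.
  apply Rmult_le_compat; auto; apply Rabs_pos.
Qed.

Lemma cont_locbd n (DH : vec -> R) :
  (forall z eps, eps > 0 -> exists del, del > 0 /\ forall z', vnorm n (vsub z' z) < del -> Rabs (DH z' - DH z) < eps) ->
  forall z0, exists r K, r > 0 /\ forall z, vnorm n (vsub z z0) < r -> Rabs (DH z) <= K.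
Proof.
  intros Hc z0. destruct (Hc z0 1 ltac:(lra)) as [d [Hd Hd']]. exists d, (Rabs (DH z0) + 1). split; auto.
  intros z Hz. specialize (Hd' z Hz).
  replace (DH z) with ((DH z - DH z0) + DH z0) by ring. eapply Rle_trans; [apply Rabs_triang|lra].
Qed.


Lemma dist3_pack n q (z z0 : vec) :
  dist3 n q z (fun c => z (n + c)%nat) (fun c => z (n + q + c)%nat)
            z0 (fun c => z0 (n + c)%nat) (fun c => z0 (n + q + c)%nat) = vnorm (n + q + q) (vsub z z0).
Proof.
  unfold dist3. rewrite !vnorm_sq. unfold vnorm. f_equal.
  rewrite (sumR_split (n + q) q), (sumR_split n q). unfold vsub. reflexivity.
Qed.

Lemma f_bound n q f : locLip_f n q f -> forall M, exists K, forall x u d,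
  (forall k, (k < n)%nat -> Rabs (x k) <= M) -> (forall l, (l < q)%nat -> Rabs (u l) <= M) ->
  (forall l, (l < q)%nat -> Rabs (d l) <= M) -> forall k, (k < n)%nat -> Rabs (f x u d k) <= K.
Proof.
  intros Hf M.
  set (unp := fun (z : vec) => f z (fun c => z (n + c)%nat) (fun c => z (n + q + c)%nat)).
  destruct (fin_max n (fun k K => forall z, (forall c, (c < n + q + q)%nat -> Rabs (z c) <= M) ->
                        Rabs (unp z k) <= K)) as [K HK].
  { intros k Hk. apply (compact_bound (n + q + q) (fun z => Rabs (unp z k))).
    intros z0. destruct (Hf z0 (fun c => z0 (n + c)%nat) (fun c => z0 (n + q + c)%nat)) as [rad [Hrad [L HL]]].
    exists rad, (Rabs (unp z0 k) + Rabs L * rad). split; auto.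
    intros z Hz. assert (Hz3 := Hz). rewrite <- dist3_pack in Hz3.
    assert (H0: dist3 n q z0 (fun c => z0 (n + c)%nat) (fun c => z0 (n + q + c)%nat)
                 z0 (fun c => z0 (n + c)%nat) (fun c => z0 (n + q + c)%nat) < rad).
    { rewrite dist3_pack. rewrite vnorm_zero by (intros; unfold vsub; ring). lra. }
    specialize (HL _ _ _ _ _ _ Hz3 H0). rewrite dist3_pack in HL.
    pose proof (coord_le_vnorm n (vsub (unp z) (unp z0)) k Hk) as H.
    change (vsub (unp z) (unp z0) k) with (unp z k - unp z0 k) in H.
    change (vnorm n (vsub (unp z) (unp z0)) <= L * vnorm (n + q + q) (vsub z z0)) in HL.
    assert (L * vnorm (n + q + q) (vsub z z0) <= Rabs L * rad).
    { apply Rle_trans with (Rabs L * vnorm (n + q + q) (vsub z z0)).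
      apply Rmult_le_compat_r; [apply vnorm_nonneg|apply Rle_abs].
      apply Rmult_le_compat_l; [apply Rabs_pos|]. lra. }
    replace (unp z k) with ((unp z k - unp z0 k) + unp z0 k) by ring.
    eapply Rle_trans; [apply Rabs_triang|]. lra. }
  { intros j K0 K1 H1 H2 z Hz. eapply Rle_trans; [apply H1|]; auto. }
  exists K. intros x u d Hx Hu Hd k Hk.
  set (z := fun c => if Nat.ltb c n then x c else if Nat.ltb c (n + q) then u (c - n)%nat else d (c - n - q)%nat).
  assert (E: f x u d k = unp z k).
  { unfold unp. apply (f_dep n q f Hf); auto.
    - intros k' Hk'. unfold z. rewrite (proj2 (Nat.ltb_lt _ _)) by auto. auto.
    - intros l Hl. unfold z. rewrite (proj2 (Nat.ltb_ge _ _)) by lia. rewrite (proj2 (Nat.ltb_lt _ _)) by lia.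
      f_equal; lia.
    - intros l Hl. unfold z. rewrite (proj2 (Nat.ltb_ge _ _)) by lia. rewrite (proj2 (Nat.ltb_ge _ _)) by lia.
      f_equal; lia. }
  rewrite E. apply HK; auto. intros c Hc. unfold z.
  destruct (Nat.ltb_spec c n). apply Hx; auto. destruct (Nat.ltb_spec c (n + q)). apply Hu; lia. apply Hd; lia.
Qed.

Lemma w_bound mi si (w : R -> vec) : exo_ok mi si ->
  (forall k t, (k < mi)%nat -> 0 < t -> derivable_pt_lim (fun t => w t k) t (si (w t) k)) ->
  forall t k, 1 <= t -> (k < mi)%nat -> Rabs (w t k) <= vnorm mi (w 1).
Proof.
  intros [Hlip [Hs0 Hmon]] Hw t k Ht Hk.
  set (W := fun t => sumR mi (fun k => w t k ^ 2 / 2)).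
  set (W' := fun t => sumR mi (fun k => w t k * si (w t) k)).
  assert (HW: forall t, 0 < t -> derivable_pt_lim W t (W' t)).
  { intros t' Ht'. apply deriv_sumR. intros j Hj. apply dpl_sq_half. apply Hw; auto. }
  assert (HW': forall t, W' t <= 0).
  { intros t'. pose proof (Hmon (w t') (fun _ => 0)) as Hm. unfold dot, vsub in Hm.
    unfold W'. rewrite (sumR_ext mi _ (fun j => (w t' j - 0) * (si (w t') j - si (fun _ => 0) j))); auto.
    intros j Hj. rewrite Hs0 by auto. ring. }
  assert (Hle: W t <= W 1).
  { destruct (Rle_lt_or_eq_dec _ _ Ht) as [Hlt|He]; [|subst; lra].
    destruct (MVT_cor2 W W' 1 t Hlt (fun c Hc => HW c ltac:(lra))) as [c [Ec Hc]].
    pose proof (HW' c). assert (W' c * (t - 1) <= 0 * (t - 1)) by (apply Rmult_le_compat_r; lra). lra. }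
  eapply Rle_trans; [apply (coord_le_vnorm mi (w t) k Hk)|].
  unfold vnorm. apply sqrt_le_1_alt.
  unfold W in Hle. rewrite (sumR_ext mi (fun k => w t k ^ 2 / 2) (fun k => / 2 * w t k ^ 2)) in Hle by (intros; field).
  rewrite (sumR_ext mi (fun k => w 1 k ^ 2 / 2) (fun k => / 2 * w 1 k ^ 2)) in Hle by (intros; field).
  rewrite !sumR_scal_l in Hle. lra.
Qed.

Theorem theorem2
  (n q N E : nat) (m : nat -> nat)
  (f : vec -> vec -> vec -> vec) (h : vec -> vec) (sigma : R)
  (s : nat -> vec -> vec) (Rm : nat -> mat)
  (A B Bp : mat) (delta : nat -> R)
  (x : nat -> R -> vec) (w : nat -> R -> vec)
  (zeta : nat -> R -> vec) (kappa : nat -> R -> R)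
  (Hf : locLip_f n q f) (Hh : C1map n q h) (Hpass : iOFP n q f h sigma)
  (Hexo : forall i, (i < N)%nat -> exo_ok (m i) (s i))
  (HA : graph_ok N A) (HB : is_incidence N A E B) (HBp : is_pinv N E B Bp)
  (Hdelta : forall g, (g < E)%nat -> delta g > 0)
  (* exosystems *)
  (Hw : forall i k t, (i < N)%nat -> (k < m i)%nat -> 0 < t ->
     derivable_pt_lim (fun t => w i t k) t (s i (w i t) k))
  (* agents *)
  (Hx : forall i k t, (i < N)%nat -> (k < n)%nat -> 0 < t ->
     derivable_pt_lim (fun t => x i t k) t
       (f (x i t) (uin q N E m Bp Rm B h x zeta kappa i t) (din m Rm w i t) k))
  (* controller states *)
  (Hzeta : forall g c t, (g < E)%nat -> (c < offs m N)%nat -> 0 < t ->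
     derivable_pt_lim (fun t => zeta g t c) t
       (sstack N m s (zeta g t) c
        + sumR q (fun l => Hg q N m Bp Rm g l c * rho N B h x g t l)))
  (Hkappa : forall g t, (g < E)%nat -> 0 < t ->
     derivable_pt_lim (kappa g) t
       (delta g * dot q (rho N B h x g t) (rho N B h x g t)))
  (* boundedness of (x, zeta, kappa) on [0, oo) *)
  (Hbdd : exists M0, forall t, 0 <= t ->
     (forall i k, (i < N)%nat -> (k < n)%nat -> Rabs (x i t k) <= M0) /\
     (forall g c, (g < E)%nat -> (c < offs m N)%nat -> Rabs (zeta g t c) <= M0) /\
     (forall g, (g < E)%nat -> Rabs (kappa g t) <= M0)) :
  forall i, (i < N)%nat -> forall eps, eps > 0 ->
    exists T, forall t, t >= T ->
      vnorm q (vsub (h (x i t)) (ybar N h x t)) < eps.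
Proof.
  intros i0 Hi0 eps Heps.
  assert (HN: (0 < N)%nat) by lia.
  pose proof (Pform N A E B Bp HN HA HB HBp) as HP.
  assert (HNr: 0 < INR N) by (apply lt_0_INR; lia).
  pose (Q := fun t => sumR E (fun g => sumR q (fun l => rho N B h x g t l ^ 2))).
  assert (HQ0: forall t, 0 <= Q t).
  { intros t. apply sumR_nonneg; intros; apply sumR_nonneg; intros; apply pow2_ge_0. }
  assert (HQ: forall e, e > 0 -> exists T, forall t, t >= T -> Q t < e).
  { destruct Hh as [Hhdep [Dh [Hhpar Hhcont]]].
    destruct Hpass as [Phi [D1 [D2 [al [au [HC1 [_ [_ [HPhi Hdiss]]]]]]]]].
    destruct Hbdd as [M0 HM0].
    pose (ee := fun g i k t => zeta g t (offs m i + k)%nat - w i t k).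
    pose (Eh := fun g j l t => sumR (m j) (fun k => Rm j l k * ee g j k t)).
    pose (X := fun g l t => sumR N (fun j => Bp g j * Eh g j l t) + kappa g t * rho N B h x g t l).
    pose (cc := fun i l t => sumR E (fun g => B i g * X g l t)).
    pose (Cp := sumR N (fun i => sumR N (fun j => sumR E (fun g => (Bp g i - Bp g j) ^ 2)))).
    pose (ks := (Rabs sigma * Cp + 1) / (2 * INR N)).
    pose (fx := fun i t => f (x i t) (uin q N E m Bp Rm B h x zeta kappa i t) (din m Rm w i t)).
    pose (V := fun t => sumR N (fun i => sumR N (fun j => Phi (x i t) (x j t)))
        + 2 * INR N * sumR E (fun g => sumR N (fun i => sumR (m i) (fun k => ee g i k t ^ 2 / 2)))
        + 2 * INR N * sumR E (fun g => / delta g * ((kappa g t - ks) ^ 2 / 2))).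
    pose (ed := fun g i k t => (s i (fun k' => zeta g t (offs m i + k')%nat) k
              + sumR q (fun l => Bp g i * Rm i l k * rho N B h x g t l)) - s i (w i t) k).
    pose (V' := fun t => sumR N (fun i => sumR N (fun j =>
          dot n (D1 (pk n (x i t) (x j t)) (x j t)) (fx i t) + dot n (D2 (pk n (x i t) (x j t)) (x j t)) (fx j t)))
        + 2 * INR N * sumR E (fun g => sumR N (fun i => sumR (m i) (fun k => ee g i k t * ed g i k t)))
        + 2 * INR N * sumR E (fun g => / delta g * ((kappa g t - ks) * (delta g * dot q (rho N B h x g t) (rho N B h x g t))))).
    assert (HVd: forall t, 0 < t -> derivable_pt_lim V t (V' t)).
    { intros t Ht. unfold V, V'.
      apply dpl_plus; [apply dpl_plus|].
      - apply deriv_sumR; intros i Hi. apply deriv_sumR; intros j Hj.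
        apply (phi_pair_chain n Phi D1 D2 (x i) (x j) (fx i t) (fx j t) t HC1).
        + intros c Hc. apply Hx; auto.
        + intros c Hc. apply Hx; auto.
      - apply dpl_scal. apply deriv_sumR; intros g HgE. apply deriv_sumR; intros i Hi.
        apply deriv_sumR; intros k Hk.
        apply dpl_sq_half. unfold ee.
        replace (ed g i k t) with (sstack N m s (zeta g t) (offs m i + k)%nat
            + sumR q (fun l => Hg q N m Bp Rm g l (offs m i + k)%nat * rho N B h x g t l) - s i (w i t) k).
        + apply (dpl_minus (fun t => zeta g t (offs m i + k)%nat) (fun t => w i t k)).
          * apply Hzeta; auto. apply blk_lt; auto.
          * apply Hw; auto.
        + unfold ed. rewrite sstack_blk by auto. f_equal. f_equal. apply sumR_ext. intros l Hl.
          rewrite Hg_blk by auto. ring.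
      - apply dpl_scal. apply deriv_sumR; intros g HgE. apply dpl_scal.
        apply (dpl_sq_half (fun s => kappa g s - ks)).
        replace (delta g * dot q (rho N B h x g t) (rho N B h x g t))
          with (delta g * dot q (rho N B h x g t) (rho N B h x g t) - 0) by ring.
        apply dpl_minus; [apply Hkappa; auto | apply dpl_const]. }

    assert (HVle: forall t, 0 < t -> V' t <= - Q t).
    { intros t Ht.
      pose (y := fun i l => h (x i t) l).
      pose (rr := fun g l => rho N B h x g t l).
      pose (ui := fun i => uin q N E m Bp Rm B h x zeta kappa i t).
      pose (di := fun i => din m Rm w i t).
      assert (Hvout: forall g l, (l < q)%nat ->
         vout q N m Bp Rm B h x zeta kappa g t l = X g l t + sumR N (fun j => Bp g j * di j l)).
      { intros g l Hl. unfold vout, X. rewrite sumR_offs.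
        rewrite (sumR_ext N _ (fun j => Bp g j * Eh g j l t + Bp g j * di j l)).
        - rewrite sumR_plus. ring.
        - intros j Hj. unfold Eh, ee, di, din. rewrite <- Rmult_plus_distr_l, <- sumR_plus, <- sumR_scal_l.
          apply sumR_ext. intros k Hk. rewrite Hg_blk by auto. ring. }
      assert (Hu: forall i l, (i < N)%nat -> (l < q)%nat ->
         ui i l + di i l = / INR N * sumR N (fun j => di j l) - cc i l t).
      { intros i l Hi Hl. unfold ui, uin, cc.
        rewrite (sumR_ext E (fun g => B i g * vout q N m Bp Rm B h x zeta kappa g t l)
                 (fun g => B i g * X g l t + sumR N (fun j => B i g * Bp g j * di j l))).
        2: { intros g HgE. rewrite Hvout by auto. rewrite Rmult_plus_distr_l, <- sumR_scal_l. f_equal.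
             apply sumR_ext; intros; ring. }
        rewrite sumR_plus, (sumR_swap E N).
        rewrite (sumR_ext N (fun j => sumR E (fun g => B i g * Bp g j * di j l))
                   (fun j => (if Nat.eqb i j then di j l else 0) - / INR N * di j l)).
        2: { intros j Hj. rewrite sumR_scal_r, HP by auto. destruct (Nat.eqb i j); ring. }
        rewrite sumR_minus, sumR_scal_l, (sumR_delta' N i (fun j => di j l)) by auto. ring. }
      assert (Hdi: forall i j, (i < N)%nat -> (j < N)%nat ->
        dot n (D1 (pk n (x i t) (x j t)) (x j t)) (fx i t) + dot n (D2 (pk n (x i t) (x j t)) (x j t)) (fx j t)
        <= sigma * sumR q (fun l => (y i l - y j l) ^ 2) - sumR q (fun l => (y i l - y j l) * (cc i l t - cc j l t))).
      { intros i j Hi Hj.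
        pose (p := pk n (x i t) (x j t)).
        assert (Hp: forall k, (k < n)%nat -> p k = x i t k).
        { intros k Hk. unfold p, pk. rewrite (proj2 (Nat.ltb_lt _ _)) by auto. auto. }
        pose proof (Hdiss p (x j t) (ui i) (ui j) (di i) (di j)) as H.
        assert (E1: dot n (D1 p (x j t)) (fx i t) = dot n (D1 p (x j t)) (f p (ui i) (di i))).
        { unfold dot. apply sumR_ext. intros k Hk. f_equal. unfold fx.
          apply (f_dep n q f Hf (x i t) p); [intros; symmetry; apply Hp; auto|intros; reflexivity|intros; reflexivity|auto]. }
        assert (E2: vnorm q (vsub (h p) (h (x j t))) ^ 2 = sumR q (fun l => (y i l - y j l) ^ 2)).
        { rewrite vnorm_sq. apply sumR_ext. intros l Hl. unfold vsub, y. rewrite (Hhdep p (x i t) Hp l Hl). auto. }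
        assert (E3: dot q (vsub (h p) (h (x j t))) (fun l => ui i l + di i l - (ui j l + di j l))
                  = - sumR q (fun l => (y i l - y j l) * (cc i l t - cc j l t))).
        { unfold dot. rewrite <- sumR_opp. apply sumR_ext. intros l Hl. unfold vsub, y.
          rewrite (Hhdep p (x i t) Hp l Hl). rewrite (Hu i l), (Hu j l) by auto. ring. }
        fold p. rewrite E1. change (fx j t) with (f (x j t) (ui j) (di j)). rewrite E2, E3 in H. lra. }
      pose (A1 := sumR E (fun g => sumR q (fun l => rr g l * sumR N (fun j => Bp g j * Eh g j l t)))).
      pose (A2 := sumR E (fun g => kappa g t * sumR q (fun l => rr g l ^ 2))).
      assert (HT: sumR N (fun i => sumR N (fun j => sumR q (fun l => (y i l - y j l) * (cc i l t - cc j l t))))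
                  = 2 * INR N * (A1 + A2)).
      { rewrite (sumR_ext N _ (fun i => sumR q (fun l => sumR N (fun j => (y i l - y j l) * (cc i l t - cc j l t)))))
          by (intros; apply sumR_swap).
        rewrite sumR_swap.
        rewrite (sumR_ext q _ (fun l => 2 * INR N * sumR E (fun g => rr g l * X g l t))).
        2: { intros l Hl. rewrite (pairsum N (fun i => y i l) (fun i => cc i l t)).
             assert (Hcs: sumR N (fun i => cc i l t) = 0).
             { unfold cc. rewrite sumR_swap. rewrite (sumR_ext E _ (fun _ => 0)); [apply sumR_zero|].
               intros g HgE. rewrite sumR_scal_r, (colsum_zero N A E B HB g HgE). ring. }
             assert (Hyc: sumR N (fun i => y i l * cc i l t) = sumR E (fun g => rr g l * X g l t)).
             { unfold cc. rewrite (sumR_ext N _ (fun i => sumR E (fun g => B i g * y i l * X g l t)))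
                 by (intros; rewrite <- sumR_scal_l; apply sumR_ext; intros; ring).
               rewrite sumR_swap. apply sumR_ext. intros g HgE. rewrite sumR_scal_r. reflexivity. }
             rewrite Hcs, Hyc. ring. }
        rewrite sumR_scal_l. f_equal. unfold A1, A2. rewrite sumR_swap. rewrite <- sumR_plus.
        apply sumR_ext. intros g HgE. rewrite <- sumR_scal_l, <- sumR_plus. apply sumR_ext. intros l Hl.
        unfold X. fold (rr g l). ring. }
      assert (Hyd: forall i j l, (i < N)%nat -> (j < N)%nat ->
                 y i l - y j l = sumR E (fun g => (Bp g i - Bp g j) * rr g l)).
      { intros i j l Hi Hj. pose proof (y_dev N E B Bp (fun k => y k l) HP i Hi) as Ei.
        pose proof (y_dev N E B Bp (fun k => y k l) HP j Hj) as Ej.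
        rewrite (sumR_ext E _ (fun g => Bp g i * rr g l - Bp g j * rr g l)) by (intros; ring).
        rewrite sumR_minus. unfold rr, rho. unfold y in *. simpl in Ei, Ej. lra. }
      assert (HS: sumR N (fun i => sumR N (fun j => sigma * sumR q (fun l => (y i l - y j l) ^ 2)))
                  <= Rabs sigma * Cp * Q t).
      { apply Rle_trans with (sumR N (fun i => sumR N (fun j => (Rabs sigma * Q t) * sumR E (fun g => (Bp g i - Bp g j) ^ 2)))).
        - apply sumR_le; intros i Hi; apply sumR_le; intros j Hj.
          assert (HSij: sumR q (fun l => (y i l - y j l) ^ 2) <= sumR E (fun g => (Bp g i - Bp g j) ^ 2) * Q t).
          { apply Rle_trans with (sumR q (fun l => sumR E (fun g => (Bp g i - Bp g j) ^ 2) * sumR E (fun g => rr g l ^ 2))).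
            + apply sumR_le; intros l Hl. rewrite Hyd by auto. apply cauchy_schwarz.
            + rewrite sumR_scal_l. rewrite (sumR_swap q E). right. reflexivity. }
          assert (0 <= sumR q (fun l => (y i l - y j l) ^ 2)) by (apply sumR_nonneg; intros; apply pow2_ge_0).
          apply Rle_trans with (Rabs sigma * sumR q (fun l => (y i l - y j l) ^ 2)).
          + apply Rmult_le_compat_r; [auto|apply Rle_abs].
          + rewrite Rmult_assoc, (Rmult_comm (Q t)). apply Rmult_le_compat_l; [apply Rabs_pos|auto].
        - right. unfold Cp. rewrite <- sumR_scal_l. rewrite Rmult_comm, <- sumR_scal_r.
          apply sumR_ext; intros i Hi. rewrite sumR_scal_l. ring. }
      assert (HVe: sumR E (fun g => sumR N (fun i => sumR (m i) (fun k => ee g i k t * ed g i k t))) <= A1).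
      { unfold A1. apply sumR_le. intros g HgE.
        rewrite (sumR_ext N _ (fun i => dot (m i) (vsub (fun k => zeta g t (offs m i + k)%nat) (w i t))
                  (vsub (s i (fun k => zeta g t (offs m i + k)%nat)) (s i (w i t)))
                  + sumR q (fun l => rr g l * (Bp g i * Eh g i l t)))).
        2: { intros i Hi.
             rewrite (sumR_ext (m i) _ (fun k => ee g i k t * (s i (fun k' => zeta g t (offs m i + k')%nat) k - s i (w i t) k)
                        + sumR q (fun l => rr g l * (Bp g i * (Rm i l k * ee g i k t))))).
             - rewrite sumR_plus. f_equal. rewrite (sumR_swap (m i) q). apply sumR_ext. intros l Hl.
               unfold Eh. rewrite <- sumR_scal_l, <- sumR_scal_l. reflexivity.
             - intros k Hk. unfold ed.
               transitivity (ee g i k t * (s i (fun k' => zeta g t (offs m i + k')%nat) k - s i (w i t) k)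
                  + ee g i k t * sumR q (fun l => Bp g i * Rm i l k * rho N B h x g t l)); [ring|].
               f_equal. rewrite <- sumR_scal_l. apply sumR_ext; intros; unfold rr; ring. }
        rewrite sumR_plus.
        assert (Hd0: sumR N (fun i => dot (m i) (vsub (fun k => zeta g t (offs m i + k)%nat) (w i t))
                  (vsub (s i (fun k => zeta g t (offs m i + k)%nat)) (s i (w i t)))) <= 0).
        { rewrite <- (sumR_zero N). apply sumR_le. intros i Hi. destruct (Hexo i Hi) as [_ [_ Hm]]. apply Hm. }
        assert (Hsw: sumR N (fun i => sumR q (fun l => rr g l * (Bp g i * Eh g i l t)))
                     = sumR q (fun l => rr g l * sumR N (fun j => Bp g j * Eh g j l t))).
        { rewrite sumR_swap. apply sumR_ext. intros l Hl. rewrite sumR_scal_l. reflexivity. }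
        lra. }
      assert (HVk: sumR E (fun g => / delta g * ((kappa g t - ks) * (delta g * dot q (rho N B h x g t) (rho N B h x g t))))
                   = A2 - ks * Q t).
      { unfold A2, Q. rewrite <- sumR_scal_l, <- sumR_minus. apply sumR_ext. intros g HgE.
        assert (delta g <> 0) by (pose proof (Hdelta g HgE); lra).
        unfold dot. rewrite (sumR_ext q (fun l => rho N B h x g t l * rho N B h x g t l) (fun l => rr g l ^ 2))
          by (intros; unfold rr; ring).
        unfold rr. field; auto. }
      assert (HVP: sumR N (fun i => sumR N (fun j =>
          dot n (D1 (pk n (x i t) (x j t)) (x j t)) (fx i t) + dot n (D2 (pk n (x i t) (x j t)) (x j t)) (fx j t)))
          <= Rabs sigma * Cp * Q t - 2 * INR N * (A1 + A2)).
      { apply Rle_trans with (sumR N (fun i => sumR N (fun j => sigma * sumR q (fun l => (y i l - y j l) ^ 2)))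
           - sumR N (fun i => sumR N (fun j => sumR q (fun l => (y i l - y j l) * (cc i l t - cc j l t))))).
        - rewrite <- sumR_minus. apply sumR_le. intros i Hi. rewrite <- sumR_minus. apply sumR_le. intros j Hj.
          apply Hdi; auto.
        - rewrite HT. lra. }
      assert (Hks: 2 * INR N * ks = Rabs sigma * Cp + 1) by (unfold ks; field; lra).
      unfold V'.
      assert (2 * INR N * sumR E (fun g => sumR N (fun i => sumR (m i) (fun k => ee g i k t * ed g i k t))) <= 2 * INR N * A1)
        by (apply Rmult_le_compat_l; lra).
      rewrite HVk.
      assert (2 * INR N * (A2 - ks * Q t) = 2 * INR N * A2 - (Rabs sigma * Cp + 1) * Q t)
        by (rewrite <- Hks; ring).
      lra. }



    assert (HV0: forall t, 0 < t -> 0 <= V t).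
    { intros t Ht. unfold V.
      assert (0 <= sumR N (fun i => sumR N (fun j => Phi (x i t) (x j t)))).
      { apply sumR_nonneg; intros i Hi; apply sumR_nonneg; intros j Hj. apply (proj1 (HPhi _ _)). }
      assert (0 <= sumR E (fun g => sumR N (fun i => sumR (m i) (fun k => ee g i k t ^ 2 / 2)))).
      { apply sumR_nonneg; intros g HgE; apply sumR_nonneg; intros i Hi; apply sumR_nonneg; intros k Hk.
        pose proof (pow2_ge_0 (ee g i k t)); lra. }
      assert (0 <= sumR E (fun g => / delta g * ((kappa g t - ks) ^ 2 / 2))).
      { apply sumR_nonneg; intros g HgE. apply Rmult_le_pos.
        apply Rlt_le, Rinv_0_lt_compat, Hdelta; auto.
        pose proof (pow2_ge_0 (kappa g t - ks)); lra. }
      assert (0 <= 2 * INR N) by lra.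
      pose proof (Rmult_le_pos _ _ H2 H0). pose proof (Rmult_le_pos _ _ H2 H1). lra. }

    assert (HLip: exists LQ, forall t s, 1 <= t -> 1 <= s -> Rabs (Q t - Q s) <= LQ * Rabs (t - s)).
    { pose (M := Rabs M0).
      assert (HxM: forall t i k, 0 <= t -> (i < N)%nat -> (k < n)%nat -> Rabs (x i t k) <= M).
      { intros t i k Ht Hi Hk. eapply Rle_trans; [apply (proj1 (HM0 t Ht) i k Hi Hk)|apply Rle_abs]. }
      assert (HzM: forall t g c, 0 <= t -> (g < E)%nat -> (c < offs m N)%nat -> Rabs (zeta g t c) <= M).
      { intros t g c Ht HgE Hc. eapply Rle_trans; [apply (proj1 (proj2 (HM0 t Ht)) g c HgE Hc)|apply Rle_abs]. }
      assert (HkM: forall t g, 0 <= t -> (g < E)%nat -> Rabs (kappa g t) <= M).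
      { intros t g Ht HgE. eapply Rle_trans; [apply (proj2 (proj2 (HM0 t Ht)) g HgE)|apply Rle_abs]. }
      assert (HMp: 0 <= M) by apply Rabs_pos.
      destruct (fin_max q (fun l K => forall z, (forall k, (k < n)%nat -> Rabs (z k) <= M) -> Rabs (h z l) <= K))
        as [Kh0 HKh0].
      { intros l Hl. apply (compact_bound n (fun z => Rabs (h z l))).
        apply (h_locbd n (fun z => h z l) (fun z k => Dh z l k)).
        - intros z z' Hz. apply Hhdep; auto.
        - intros z j Hj. apply Hhpar; auto.
        - intros j Hj z e He. apply Hhcont; auto. }
      { intros j K K' H1 H2 z Hz. eapply Rle_trans; [apply H1|]; auto. }
      pose (Kh := Rabs Kh0).
      assert (HKh: forall z, (forall k, (k < n)%nat -> Rabs (z k) <= M) -> forall l, (l < q)%nat -> Rabs (h z l) <= Kh).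
      { intros z Hz l Hl. eapply Rle_trans; [apply HKh0; auto|apply Rle_abs]. }
      assert (HKhp: 0 <= Kh) by apply Rabs_pos.
      destruct (fin_max q (fun l K => forall k, (k < n)%nat -> forall z, (forall k, (k < n)%nat -> Rabs (z k) <= M) ->
                  Rabs (Dh z l k) <= K)) as [KD0 HKD0].
      { intros l Hl. apply (fin_max n (fun k K => forall z, (forall k, (k < n)%nat -> Rabs (z k) <= M) -> Rabs (Dh z l k) <= K)).
        - intros k Hk. apply (compact_bound n (fun z => Rabs (Dh z l k))).
          apply (cont_locbd n (fun z => Dh z l k)). apply Hhcont; auto.
        - intros j K K' H1 H2 z Hz. eapply Rle_trans; [apply H1|]; auto. }
      { intros j K K' H1 H2 k Hk z Hz. eapply Rle_trans; [apply H1|]; auto. }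
      pose (KD := Rabs KD0).
      assert (HKD: forall z, (forall k, (k < n)%nat -> Rabs (z k) <= M) -> forall l k, (l < q)%nat -> (k < n)%nat ->
                   Rabs (Dh z l k) <= KD).
      { intros z Hz l k Hl Hk. eapply Rle_trans; [apply HKD0; auto|apply Rle_abs]. }
      assert (HKDp: 0 <= KD) by apply Rabs_pos.
      pose (Kw := sumR N (fun i => vnorm (m i) (w i 1))).
      assert (HKw: forall t i k, 1 <= t -> (i < N)%nat -> (k < m i)%nat -> Rabs (w i t k) <= Kw).
      { intros t i k Ht Hi Hk. eapply Rle_trans.
        - apply (w_bound (m i) (s i) (w i) (Hexo i Hi)); auto.
        - apply (sumR_term_le N (fun i => vnorm (m i) (w i 1))); auto. intros; apply vnorm_nonneg. }
      assert (HKwp: 0 <= Kw) by (apply sumR_nonneg; intros; apply vnorm_nonneg).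
      pose (SB := sumR E (fun g => sumR N (fun j => Rabs (B j g)))).
      assert (HSB: forall g, (g < E)%nat -> sumR N (fun j => Rabs (B j g)) <= SB).
      { intros g HgE. apply (sumR_term_le E (fun g => sumR N (fun j => Rabs (B j g)))); auto.
        intros; apply sumR_nonneg; intros; apply Rabs_pos. }
      assert (HSBp: 0 <= SB) by (apply sumR_nonneg; intros; apply sumR_nonneg; intros; apply Rabs_pos).
      pose (Kr := SB * Kh).
      assert (HKr: forall t g l, 0 <= t -> (g < E)%nat -> (l < q)%nat -> Rabs (rho N B h x g t l) <= Kr).
      { intros t g l Ht HgE Hl. unfold rho. eapply Rle_trans; [apply Rabs_sumR|].
        apply Rle_trans with (sumR N (fun j => Rabs (B j g)) * Kh).
        - rewrite <- sumR_scal_r. apply sumR_le. intros j Hj. rewrite Rabs_mult.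
          apply Rmult_le_compat_l; [apply Rabs_pos|]. apply HKh; auto; intros; apply HxM; auto.
        - apply Rmult_le_compat_r; auto. }
      assert (HKrp: 0 <= Kr) by (apply Rmult_le_pos; auto).
      pose (Kd := sumR N (fun i => sumR q (fun l => sumR (m i) (fun k => Rabs (Rm i l k)) * Kw))).
      assert (HKd: forall t i l, 1 <= t -> (i < N)%nat -> (l < q)%nat -> Rabs (din m Rm w i t l) <= Kd).
      { intros t i l Ht Hi Hl. unfold din. eapply Rle_trans; [apply Rabs_sumR|].
        apply Rle_trans with (sumR (m i) (fun k => Rabs (Rm i l k)) * Kw).
        - rewrite <- sumR_scal_r. apply sumR_le. intros k Hk. rewrite Rabs_mult.
          apply Rmult_le_compat_l; [apply Rabs_pos|]. apply HKw; auto.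
        - apply (sumR_double_term_le N q (fun i l => sumR (m i) (fun k => Rabs (Rm i l k)) * Kw)); auto.
          intros; apply Rmult_le_pos; auto; apply sumR_nonneg; intros; apply Rabs_pos. }
      assert (HKdp: 0 <= Kd).
      { apply sumR_nonneg; intros; apply sumR_nonneg; intros; apply Rmult_le_pos; auto; apply sumR_nonneg; intros; apply Rabs_pos. }
      pose (Kv := fun g l => sumR (offs m N) (fun c => Rabs (Hg q N m Bp Rm g l c)) * M + M * Kr).
      pose (Ku := sumR N (fun i => sumR q (fun l => sumR E (fun g => Rabs (B i g) * Kv g l)))).
      assert (HKvp: forall g l, 0 <= Kv g l).
      { intros g l. unfold Kv. apply Rplus_le_le_0_compat; apply Rmult_le_pos; auto.
        apply sumR_nonneg; intros; apply Rabs_pos. }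
      assert (HKu: forall t i l, 1 <= t -> (i < N)%nat -> (l < q)%nat ->
                 Rabs (uin q N E m Bp Rm B h x zeta kappa i t l) <= Ku).
      { intros t i l Ht Hi Hl. unfold uin. rewrite Rabs_Ropp. eapply Rle_trans; [apply Rabs_sumR|].
        apply Rle_trans with (sumR E (fun g => Rabs (B i g) * Kv g l)).
        - apply sumR_le. intros g HgE. rewrite Rabs_mult. apply Rmult_le_compat_l; [apply Rabs_pos|].
          unfold vout, Kv. eapply Rle_trans; [apply Rabs_triang|]. apply Rplus_le_compat.
          + eapply Rle_trans; [apply Rabs_sumR|]. rewrite <- sumR_scal_r. apply sumR_le. intros c Hc.
            rewrite Rabs_mult. apply Rmult_le_compat_l; [apply Rabs_pos|]. apply HzM; auto; lra.
          + rewrite Rabs_mult. apply Rmult_le_compat; try apply Rabs_pos. apply HkM; auto; lra. apply HKr; auto; lra.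
        - apply (sumR_double_term_le N q (fun i l => sumR E (fun g => Rabs (B i g) * Kv g l))); auto.
          intros; apply sumR_nonneg; intros; apply Rmult_le_pos; auto; apply Rabs_pos. }
      assert (HKup: 0 <= Ku).
      { apply sumR_nonneg; intros; apply sumR_nonneg; intros; apply sumR_nonneg; intros; apply Rmult_le_pos; auto; apply Rabs_pos. }
      destruct (f_bound n q f Hf (M + Ku + Kd)) as [Kf0 HKf0].
      pose (Kf := Rabs Kf0).
      assert (HKf: forall t i k, 1 <= t -> (i < N)%nat -> (k < n)%nat -> Rabs (fx i t k) <= Kf).
      { intros t i k Ht Hi Hk. eapply Rle_trans; [|apply Rle_abs]. unfold fx. apply HKf0; auto.
        - intros k' Hk'. pose proof (HxM t i k' ltac:(lra) Hi Hk'). lra.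
        - intros l Hl. pose proof (HKu t i l Ht Hi Hl). lra.
        - intros l Hl. pose proof (HKd t i l Ht Hi Hl). lra. }
      assert (HKfp: 0 <= Kf) by apply Rabs_pos.
      pose (rd := fun g l t => sumR N (fun j => B j g * sumR n (fun k => Dh (x j t) l k * fx j t k))).
      pose (Qd := fun t => sumR E (fun g => sumR q (fun l => 2 * rho N B h x g t l * rd g l t))).
      assert (HQd: forall t, 0 < t -> derivable_pt_lim Q t (Qd t)).
      { intros t Ht. unfold Q, Qd. apply deriv_sumR; intros g HgE. apply deriv_sumR; intros l Hl.
        assert (Hr: derivable_pt_lim (fun s => rho N B h x g s l) t (rd g l t)).
        { unfold rho, rd. apply deriv_sumR. intros j Hj. apply dpl_scal.
          apply (chain_rule n (fun z => h z l) (fun z k => Dh z l k) (x j) (fx j t) t).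
          - intros z z' Hz. apply Hhdep; auto.
          - intros z k Hk. apply Hhpar; auto.
          - intros k Hk z e He. apply Hhcont; auto.
          - intros k Hk. apply Hx; auto. }
        eapply dpl_ext; [| |apply (dpl_mult _ _ _ _ t Hr Hr)].
        - intros s0. simpl. ring.
        - ring. }
      pose (Krd := SB * (INR n * (KD * Kf))).
      pose (LQ := INR E * (INR q * (2 * Kr * Krd))).
      assert (HQdb: forall t, 1 <= t -> Rabs (Qd t) <= LQ).
      { intros t Ht. unfold Qd, LQ. eapply Rle_trans; [apply Rabs_sumR|].
        rewrite <- sumR_const. apply sumR_le. intros g HgE.
        eapply Rle_trans; [apply Rabs_sumR|]. rewrite <- sumR_const. apply sumR_le. intros l Hl.
        rewrite !Rabs_mult. rewrite Rabs_right by lra.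
        apply Rle_trans with (2 * (Rabs (rho N B h x g t l) * Rabs (rd g l t))); [right; ring|].
        rewrite (Rmult_assoc 2 Kr Krd). apply Rmult_le_compat_l; [lra|]. apply Rmult_le_compat; try apply Rabs_pos.
        - apply HKr; auto; lra.
        - unfold rd, Krd. eapply Rle_trans; [apply Rabs_sumR|].
          apply Rle_trans with (sumR N (fun j => Rabs (B j g)) * (INR n * (KD * Kf))).
          + rewrite <- sumR_scal_r. apply sumR_le. intros j Hj. rewrite Rabs_mult.
            apply Rmult_le_compat_l; [apply Rabs_pos|]. eapply Rle_trans; [apply Rabs_sumR|].
            rewrite <- sumR_const. apply sumR_le. intros k Hk. rewrite Rabs_mult.
            apply Rmult_le_compat; try apply Rabs_pos.
            * apply HKD; auto; intros; apply HxM; auto; lra.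
            * apply HKf; auto.
          + apply Rmult_le_compat_r; auto. apply Rmult_le_pos; [apply pos_INR|apply Rmult_le_pos; auto]. }
      exists LQ. intros t u Ht Hs.
      destruct (Rtotal_order u t) as [Hlt|[He|Hlt]].
      - destruct (MVT_cor2 Q Qd u t Hlt (fun c Hc => HQd c ltac:(lra))) as [c [Ec Hc]].
        rewrite Ec, Rabs_mult, (Rabs_right (t - u)) by lra.
        apply Rmult_le_compat_r; [lra|]. apply HQdb; lra.
      - subst. replace (Q t - Q t) with 0 by ring. replace (t - t) with 0 by ring. rewrite Rabs_R0.
        assert (0 <= LQ) by (pose proof (HQdb t Ht); pose proof (Rabs_pos (Qd t)); lra). lra.
      - destruct (MVT_cor2 Q Qd t u Hlt (fun c Hc => HQd c ltac:(lra))) as [c [Ec Hc]].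
        rewrite Rabs_minus_sym, Ec, Rabs_mult, (Rabs_right (u - t)) by lra. rewrite (Rabs_left (t - u)) by lra.
        replace (- (t - u)) with (u - t) by ring.
        apply Rmult_le_compat_r; [lra|]. apply HQdb; lra. }

    destruct HLip as [LQ HLQ].
    intros e He. apply (barbalat V V' Q LQ HVd HVle HV0 (fun t _ => HQ0 t) HLQ e He). }
  pose (Ci := sumR E (fun g => Bp g i0 ^ 2)).
  assert (HCi: 0 <= Ci) by (apply sumR_nonneg; intros; apply pow2_ge_0).
  destruct (HQ (eps ^ 2 / (Ci + 1))) as [T HT].
  { apply Rdiv_lt_0_compat; [|lra]. apply pow_lt; lra. }
  exists T. intros t Ht. specialize (HT t Ht).
  assert (Hdev: forall l, (l < q)%nat ->
     (vsub (h (x i0 t)) (ybar N h x t) l) ^ 2 <= Ci * sumR E (fun g => rho N B h x g t l ^ 2)).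
  { intros l Hl. unfold vsub, ybar. rewrite (y_dev N E B Bp (fun j => h (x j t) l) HP i0 Hi0).
    unfold Ci, rho. apply (cauchy_schwarz E (fun g => Bp g i0)). }
  assert (HS: sumR q (fun l => (vsub (h (x i0 t)) (ybar N h x t) l) ^ 2) <= Ci * Q t).
  { eapply Rle_trans; [apply (sumR_le _ _ _ Hdev)|]. rewrite sumR_scal_l. unfold Q.
    rewrite (sumR_swap E q). lra. }
  unfold vnorm. rewrite <- (sqrt_pow2 eps) by lra. apply sqrt_lt_1_alt. split.
  { apply sumR_nonneg; intros; apply pow2_ge_0. }
  pose proof (HQ0 t).
  apply Rle_lt_trans with ((Ci + 1) * Q t). nra.
  apply (Rmult_lt_compat_l (Ci + 1)) in HT; [|lra].
  replace ((Ci + 1) * (eps ^ 2 / (Ci + 1))) with (eps ^ 2) in HT by (field; lra). lra.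
Qed.
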